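(* Let $I\subset\mathbb R$ be an interval and $\alpha\in C^\infty(I,C^\infty(\mathbb S))$ a real-valued solution of $\frac{\partial\alpha_\tau}{\partial\tau}=-\alpha_\tau(\Lambda\alpha_\tau)+(\mathcal H\alpha_\tau)(D\alpha_\tau)$ on $I$. Then $$\frac{\partial}{\partial\tau}\int_0^{2\pi}\alpha_\tau\,d\theta=-4\langle\alpha_{\tau,+},\Lambda\alpha_{\tau,+}\rangle\le0\quad(\tau\in I),$$ so $\int_0^{2\pi}\alpha_\tau d\theta$ is non-increasing in $\tau$; and if this derivative vanishes at some $\tau\in I$, then $\alpha_\tau$ is a constant function.
   Context: $\langle u,v\rangle=\int_0^{2\pi}u\bar v\,d\theta$; $u=\sum\hat u_ke^{ik\theta}$. $D=-i\,d/d\theta$, $\Lambda e^{in\theta}=|n|e^{in\theta}$, $\mathcal H\mathbf 1=0$, $\mathcal He^{in\theta}=\mathrm{sgn}(n)e^{in\theta}$ ($n\ne0$). For real $b$, $b_+=\hat b_0/2+\sum_{k\ge1}\hat b_ke^{ik\theta}$, and $\alpha_{\tau,+}=(\alpha_\tau)_+$. *)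

(* Defs.v *)
From Stdlib Require Import Reals ZArith.
From Coquelicot Require Import Coquelicot.

Open Scope R_scope.

Definition CInt (f : R -> C) (a b : R) : C :=
  (RInt (fun x => Re (f x)) a b, RInt (fun x => Im (f x)) a b).

(** Sum of a complex series (defined componentwise; meaningful when it converges). *)
Definition CSeries (s : nat -> C) : C :=
  (Series (fun n => Re (s n)), Series (fun n => Im (s n))).

Definition cexpi (x : R) : C := (cos x, sin x).

Definition CDerive (u : R -> C) (x : R) : C :=
  (Derive (fun t => Re (u t)) x, Derive (fun t => Im (u t)) x).

Definition fcoef (u : R -> C) (k : Z) : C :=
  Cmult (RtoC (/ (2 * PI))) (CInt (fun th => Cmult (u th) (cexpi (- IZR k * th))) 0 (2 * PI)).

Definition inner (u v : R -> C) : C :=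
  CInt (fun th => Cmult (u th) (Cconj (v th))) 0 (2 * PI).

Definition Dop (u : R -> C) (th : R) : C :=
  Cmult (0, -1) (CDerive u th).

(** Lambda e^{in theta} = |n| e^{in theta}:
    Lambda u = sum_{n>=0} n (uhat_n e^{in theta} + uhat_{-n} e^{-in theta}). *)
Definition Lam (u : R -> C) (th : R) : C :=
  CSeries (fun n => Cmult (RtoC (INR n))
    (Cplus (Cmult (fcoef u (Z.of_nat n)) (cexpi (INR n * th)))
           (Cmult (fcoef u (- Z.of_nat n)) (cexpi (- INR n * th))))).

(** Hilbert-type operator: H 1 = 0, H e^{in theta} = sgn(n) e^{in theta}:
    H u = sum_{n>=0} (uhat_n e^{in theta} - uhat_{-n} e^{-in theta})  (n = 0 term vanishes). *)
Definition Hil (u : R -> C) (th : R) : C :=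
  CSeries (fun n =>
    Cminus (Cmult (fcoef u (Z.of_nat n)) (cexpi (INR n * th)))
           (Cmult (fcoef u (- Z.of_nat n)) (cexpi (- INR n * th)))).

Definition pos_part (u : R -> C) (th : R) : C :=
  Cplus (Cmult (fcoef u 0%Z) (RtoC (/ 2)))
        (CSeries (fun n => Cmult (fcoef u (Z.of_nat (S n))) (cexpi (INR (S n) * th)))).

Definition toC (u : R -> R) : R -> C := fun th => RtoC (u th).

Definition is_interval (I : R -> Prop) : Prop :=
  forall x y z, I x -> I z -> x <= y <= z -> I y.

Definition continuous2_at (f : R -> R -> R) (x y : R) : Prop :=
  filterlim (fun p : R * R => f (fst p) (snd p)) (locally (x, y)) (locally (f x y)).

(** C^k on the open set J x R (first variable tau in J, second variable theta in R):
    continuous, with first-order partials that are themselves C^{k-1}. *)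
Fixpoint Ck_on (J : R -> Prop) (k : nat) (f : R -> R -> R) : Prop :=
  match k with
  | O => forall x y, J x -> continuous2_at f x y
  | S k' =>
      (forall x y, J x -> continuous2_at f x y) /\
      exists fx fy : R -> R -> R,
        (forall x y, J x -> is_derive (fun t => f t y) x (fx x y)) /\
        (forall x y, J x -> is_derive (fun t => f x t) y (fy x y)) /\
        Ck_on J k' fx /\ Ck_on J k' fy
  end.

Definition smooth_on (J : R -> Prop) (f : R -> R -> R) : Prop :=
  forall k, Ck_on J k f.

(* Main.v *)
Require Import Defs.
From Stdlib Require Import Reals ZArith Lra Lia.
From Coquelicot Require Import Coquelicot.
Open Scope R_scope.


Lemma tail_bound (f M : nat -> R) (N : nat) :
  (forall n, Rabs (f n) <= M n) -> ex_series M ->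
  Rabs (Series f - sum_n f N) <= Series M - sum_n M N.
Proof.
  intros Hb HM.
  assert (Hf : ex_series f).
  { apply (@ex_series_le R_AbsRing R_CompleteNormedModule f M); auto. }
  rewrite !sum_n_Reals.
  rewrite (Series_incr_n f (S N)) by (auto; lia).
  rewrite (Series_incr_n M (S N)) by (auto; lia).
  simpl pred.
  replace (sum_f_R0 f N + Series (fun k => f (S N + k)%nat) - sum_f_R0 f N)
    with (Series (fun k => f (S N + k)%nat)) by ring.
  replace (sum_f_R0 M N + Series (fun k => M (S N + k)%nat) - sum_f_R0 M N)
    with (Series (fun k => M (S N + k)%nat)) by ring.
  assert (HM' : ex_series (fun k => M (S N + k)%nat)) by (apply ex_series_incr_n; auto).
  eapply Rle_trans. apply Series_Rabs.
  apply (@ex_series_le R_AbsRing R_CompleteNormedModule _ (fun k => M (S N + k)%nat)); auto.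
  intros n. unfold norm; simpl. rewrite Rabs_Rabsolu. auto.
  apply Series_le; auto. intros n; split; [apply Rabs_pos|auto].
Qed.

Lemma RInt_Series_glob (f : nat -> R -> R) (M I : nat -> R) (a b : R) :
  (forall n, is_RInt (f n) a b (I n)) ->
  (forall n x, Rabs (f n x) <= M n) ->
  ex_series M ->
  is_RInt (fun x => Series (fun n => f n x)) a b (Series I) /\ ex_series I.
Proof.
  intros HI Hb HM.
  set (G := fun (N : nat) (x : R) => sum_n (fun n => f n x) N).
  assert (HG : forall N, is_RInt (G N) a b (sum_n I N)).
  { induction N.
    - unfold G. apply (is_RInt_ext (f 0%nat)).
      intros; rewrite sum_O; auto. rewrite sum_O; auto.
    - apply (is_RInt_ext (fun x => plus (G N x) (f (S N) x))).
      intros; unfold G; rewrite sum_Sn; auto.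
      rewrite sum_Sn. apply (@is_RInt_plus R_NormedModule); auto. }
  assert (Hc : filterlim G eventually
     (@locally (fct_UniformSpace R R_UniformSpace) (fun x => Series (fun n => f n x)))).
  { apply <- (@filterlim_locally _ _ eventually _ G). intros eps.
    assert (HMl := Series_correct _ HM). unfold is_series in HMl.
    pose proof (proj1 (@filterlim_locally _ _ eventually _ (sum_n M) _) HMl eps) as HMl2. clear HMl. rename HMl2 into HMl.
    destruct HMl as [N0 HN0]. exists N0. intros N HN.
    intros t. specialize (HN0 N HN).
    change (Rabs (G N t - Series (fun n => f n t)) < eps).
    change (Rabs (sum_n M N - Series M) < eps) in HN0.
    unfold G. rewrite Rabs_minus_sym.
    eapply Rle_lt_trans. apply tail_bound. intros; apply Hb. auto.
    rewrite Rabs_minus_sym in HN0.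
    eapply Rle_lt_trans. apply Rle_abs. auto. }
  destruct (filterlim_RInt G a b eventually _ _ (sum_n I) HG Hc) as [If [Hl Hi]].
  assert (Hs : is_series I If) by exact Hl.
  rewrite (is_series_unique _ _ Hs). split; auto. exists If; auto.
Qed.

Lemma RInt_Series (f : nat -> R -> R) (M I : nat -> R) (a b : R) :
  a <= b ->
  (forall n, is_RInt (f n) a b (I n)) ->
  (forall n x, a <= x <= b -> Rabs (f n x) <= M n) ->
  ex_series M ->
  is_RInt (fun x => Series (fun n => f n x)) a b (Series I) /\ ex_series I.
Proof.
  intros Hab HI Hb HM.
  set (cl := fun x => Rmax a (Rmin b x)).
  assert (Hcl : forall x, a <= cl x <= b).
  { intros x; unfold cl. split. apply Rmax_l. apply Rmax_lub; [lra|apply Rmin_l]. }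
  assert (Hin : forall x, Rmin a b < x < Rmax a b -> cl x = x).
  { intros x Hx. rewrite Rmin_left, Rmax_right in Hx by lra. unfold cl.
    rewrite Rmin_right by lra. rewrite Rmax_right by lra. auto. }
  destruct (RInt_Series_glob (fun n x => f n (cl x)) M I a b) as [H1 H2]; auto.
  - intros n. apply (is_RInt_ext (f n)); auto. intros x Hx; rewrite Hin; auto.
  - split; auto. apply (is_RInt_ext (fun x => Series (fun n => f n (cl x)))); auto.
    intros x Hx; rewrite Hin; auto.
Qed.

Lemma sum_delta (p : nat) (x : R) (N : nat) :
  sum_n (fun m => if Nat.eqb m p then x else 0) N = if Nat.leb p N then x else 0.
Proof.
  induction N.
  - rewrite sum_O. destruct p; simpl; auto.
  - rewrite sum_Sn, IHN. change (plus ?a ?b) with (a + b).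
    destruct (Nat.eqb_spec (S N) p); destruct (Nat.leb_spec p N);
    destruct (Nat.leb_spec p (S N)); try lia; simpl; lra.
Qed.

Lemma Series_delta (p : nat) (x : R) :
  Series (fun m => if Nat.eqb m p then x else 0) = x.
Proof.
  apply is_series_unique. unfold is_series.
  apply (filterlim_ext_loc (fun _ => x)).
  exists p. intros N HN. rewrite sum_delta. destruct (Nat.leb_spec p N); auto; lia.
  apply filterlim_const.
Qed.

Lemma Series_zero : Series (fun _ => 0) = 0.
Proof. apply is_series_unique. unfold is_series.
  apply (filterlim_ext (fun _ => 0)). intros N; induction N.
  rewrite sum_O; auto. rewrite sum_Sn, <- IHN. simpl. unfold plus; simpl; lra.
  apply filterlim_const. Qed.

Lemma Series_nonneg_zero (u : nat -> R) :
  (forall n, 0 <= u n) -> ex_series u -> Series u = 0 -> forall n, u n = 0.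
Proof.
  intros Hp He Hs n.
  assert (H : sum_f_R0 u n <= Series u).
  { rewrite (Series_incr_n u (S n)) by (auto; lia). simpl pred.
    assert (0 <= Series (fun k => u (S n + k)%nat)).
    { rewrite <- Series_zero.
      apply Series_le; auto. intros; split; [lra|auto].
      apply ex_series_incr_n; auto. }
    lra. }
  assert (H2 : u n <= sum_f_R0 u n).
  { destruct n. simpl; lra. simpl.
    assert (0 <= sum_f_R0 u n). { apply cond_pos_sum; auto. } lra. }
  specialize (Hp n). lra.
Qed.

Lemma Series_nonneg (u : nat -> R) : (forall n, 0 <= u n) -> ex_series u -> 0 <= Series u.
Proof.
  intros Hp He. rewrite <- Series_zero.
  apply Series_le; auto. intros; split; [lra|auto].
Qed.

Lemma ex_series_tele : ex_series (fun k => / ((INR k + 1) * (INR k + 2))).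
Proof.
  exists 1. unfold is_series.
  apply (filterlim_ext (fun N => 1 - / (INR N + 2))).
  - intros N. induction N.
    + rewrite sum_O. simpl. field.
    + rewrite sum_Sn, <- IHN. change (plus ?a ?b) with (a + b). rewrite S_INR.
      assert (0 <= INR N) by apply pos_INR. field. lra.
  - change (is_lim_seq (fun N => 1 - / (INR N + 2)) 1).
    replace (Finite 1) with (Rbar_minus 1 0) by (simpl; f_equal; ring).
    apply is_lim_seq_minus'. apply is_lim_seq_const.
    replace (Finite 0) with (Rbar_inv p_infty) by auto.
    apply is_lim_seq_inv; [|discriminate].
    apply (is_lim_seq_plus _ _ p_infty 2 p_infty). apply is_lim_seq_INR.
    apply is_lim_seq_const. unfold is_Rbar_plus; simpl; auto.
Qed.

Lemma isR_plus (f g : R -> R) a b (If Ig : R) : is_RInt f a b If -> is_RInt g a b Ig ->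
  is_RInt (fun x => f x + g x) a b (If + Ig).
Proof. intros H1 H2. exact (@is_RInt_plus R_NormedModule f g a b If Ig H1 H2). Qed.
Lemma isR_minus (f g : R -> R) a b (If Ig : R) : is_RInt f a b If -> is_RInt g a b Ig ->
  is_RInt (fun x => f x - g x) a b (If - Ig).
Proof. intros H1 H2. exact (@is_RInt_minus R_NormedModule f g a b If Ig H1 H2). Qed.
Lemma isR_scal (f : R -> R) a b k (If : R) : is_RInt f a b If ->
  is_RInt (fun x => k * f x) a b (k * If).
Proof. intros H1. exact (@is_RInt_scal R_NormedModule f a b k If H1). Qed.
Lemma isR_opp (f : R -> R) a b (If : R) : is_RInt f a b If ->
  is_RInt (fun x => - f x) a b (- If).
Proof. intros H1. exact (@is_RInt_opp R_NormedModule f a b If H1). Qed.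
Lemma isR_const a b (c : R) : is_RInt (fun _ => c) a b ((b - a) * c).
Proof. exact (@is_RInt_const R_NormedModule a b c). Qed.
Lemma isR_ext (f g : R -> R) a b (l : R) : (forall x, f x = g x) -> is_RInt f a b l -> is_RInt g a b l.
Proof. intros H; apply is_RInt_ext; auto. Qed.
Lemma isR_eq (f : R -> R) a b (l lp : R) : l = lp -> is_RInt f a b l -> is_RInt f a b lp.
Proof. intros ->; auto. Qed.

Lemma sin_2pi_Z (z : Z) : sin (IZR z * (2 * PI)) = 0.
Proof. apply sin_eq_0_1. exists (2 * z)%Z. rewrite mult_IZR. simpl. ring. Qed.
Lemma cos_2pi_Z (z : Z) : cos (IZR z * (2 * PI)) = 1.
Proof.
  replace (IZR z * (2 * PI)) with (2 * (IZR z * PI)) by ring.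
  rewrite cos_2a_sin. rewrite sin_eq_0_1. ring. exists z; auto.
Qed.

Lemma is_RInt_cosZ (z : Z) :
  is_RInt (fun x => cos (IZR z * x)) 0 (2 * PI) (if Z.eqb z 0 then 2 * PI else 0).
Proof.
  destruct (Z.eqb_spec z 0) as [->|Hz]; cbv iota.
  - apply (isR_ext (fun _ => 1)). intros; rewrite Rmult_0_l, cos_0; auto.
    apply (isR_eq _ _ _ ((2*PI - 0) * 1)). ring. apply isR_const.
  - assert (Hr : IZR z <> 0) by (apply not_0_IZR; auto).
    apply (isR_eq _ _ _ (sin (IZR z * (2*PI)) / IZR z - sin (IZR z * 0) / IZR z)).
    rewrite sin_2pi_Z, Rmult_0_r, sin_0. field; auto.
    apply (is_RInt_derive (fun x => sin (IZR z * x) / IZR z)).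
    + intros x _. auto_derive; auto. field; auto.
    + intros x _. apply (ex_derive_continuous (fun x => cos (IZR z * x))). auto_derive; auto.
Qed.

Lemma is_RInt_sinZ (z : Z) :
  is_RInt (fun x => sin (IZR z * x)) 0 (2 * PI) 0.
Proof.
  destruct (Z.eqb_spec z 0) as [->|Hz]; cbv iota.
  - apply (isR_ext (fun _ => 0)). intros; rewrite Rmult_0_l, sin_0; auto.
    apply (isR_eq _ _ _ ((2*PI - 0) * 0)). ring. apply isR_const.
  - assert (Hr : IZR z <> 0) by (apply not_0_IZR; auto).
    apply (isR_eq _ _ _ ((- cos (IZR z * (2*PI)) / IZR z) - (- cos (IZR z * 0) / IZR z))).
    rewrite cos_2pi_Z, Rmult_0_r, cos_0. field; auto.
    apply (is_RInt_derive (fun x => - cos (IZR z * x) / IZR z)).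
    + intros x _. auto_derive; auto. field; auto.
    + intros x _. apply (ex_derive_continuous (fun x => sin (IZR z * x))). auto_derive; auto.
Qed.

Definition dlt (j k : nat) : R := if Nat.eqb j k then 1 else 0.

Lemma Zdiff_eqb (j k : nat) : Z.eqb (Z.of_nat j - Z.of_nat k) 0 = Nat.eqb j k.
Proof. destruct (Z.eqb_spec (Z.of_nat j - Z.of_nat k) 0); destruct (Nat.eqb_spec j k); auto; lia. Qed.
Lemma Zsum_eqb (j k : nat) : Z.eqb (Z.of_nat j + Z.of_nat k) 0 = Nat.eqb (j + k) 0.
Proof. destruct (Z.eqb_spec (Z.of_nat j + Z.of_nat k) 0); destruct (Nat.eqb_spec (j+k) 0); auto; lia. Qed.

Lemma IZR_diff j k x : IZR (Z.of_nat j - Z.of_nat k) * x = INR j * x - INR k * x.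
Proof. rewrite minus_IZR, <- !INR_IZR_INZ. ring. Qed.
Lemma IZR_sum j k x : IZR (Z.of_nat j + Z.of_nat k) * x = INR j * x + INR k * x.
Proof. rewrite plus_IZR, <- !INR_IZR_INZ. ring. Qed.

Lemma is_RInt_cc (j k : nat) :
  is_RInt (fun x => cos (INR j * x) * cos (INR k * x)) 0 (2 * PI)
   (/2 * ((if Nat.eqb j k then 2 * PI else 0) + (if Nat.eqb (j + k) 0 then 2 * PI else 0))).
Proof.
  rewrite <- Zdiff_eqb, <- Zsum_eqb.
  apply (isR_ext (fun x => /2 * (cos (IZR (Z.of_nat j - Z.of_nat k) * x) + cos (IZR (Z.of_nat j + Z.of_nat k) * x)))).
  intros x. rewrite IZR_diff, IZR_sum, cos_minus, cos_plus. field.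
  apply isR_scal, isR_plus; apply is_RInt_cosZ.
Qed.

Lemma is_RInt_ss (j k : nat) :
  is_RInt (fun x => sin (INR j * x) * sin (INR k * x)) 0 (2 * PI)
   (/2 * ((if Nat.eqb j k then 2 * PI else 0) - (if Nat.eqb (j + k) 0 then 2 * PI else 0))).
Proof.
  rewrite <- Zdiff_eqb, <- Zsum_eqb.
  apply (isR_ext (fun x => /2 * (cos (IZR (Z.of_nat j - Z.of_nat k) * x) - cos (IZR (Z.of_nat j + Z.of_nat k) * x)))).
  intros x. rewrite IZR_diff, IZR_sum, cos_minus, cos_plus. field.
  apply isR_scal, isR_minus; apply is_RInt_cosZ.
Qed.

Lemma is_RInt_sc (j k : nat) :
  is_RInt (fun x => sin (INR j * x) * cos (INR k * x)) 0 (2 * PI) 0.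
Proof.
  apply (isR_ext (fun x => /2 * (sin (IZR (Z.of_nat j + Z.of_nat k) * x) + sin (IZR (Z.of_nat j - Z.of_nat k) * x)))).
  intros x. rewrite IZR_diff, IZR_sum, sin_minus, sin_plus. field.
  apply (isR_eq _ _ _ (/2 * (0 + 0))). ring.
  apply isR_scal, isR_plus; apply is_RInt_sinZ.
Qed.

Lemma is_RInt_cs (j k : nat) :
  is_RInt (fun x => cos (INR j * x) * sin (INR k * x)) 0 (2 * PI) 0.
Proof.
  apply (isR_ext (fun x => sin (INR k * x) * cos (INR j * x))).
  intros; ring. apply is_RInt_sc.
Qed.

Lemma is_RInt_c (k : nat) :
  is_RInt (fun x => cos (INR k * x)) 0 (2 * PI) (if Nat.eqb k 0 then 2 * PI else 0).
Proof.
  replace (Nat.eqb k 0) with (Z.eqb (Z.of_nat k) 0).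
  apply (isR_ext (fun x => cos (IZR (Z.of_nat k) * x))). intros; rewrite <- INR_IZR_INZ; auto.
  apply is_RInt_cosZ. destruct (Z.eqb_spec (Z.of_nat k) 0); destruct (Nat.eqb_spec k 0); auto; lia.
Qed.
Lemma is_RInt_s (k : nat) :
  is_RInt (fun x => sin (INR k * x)) 0 (2 * PI) 0.
Proof.
  apply (isR_ext (fun x => sin (IZR (Z.of_nat k) * x))). intros; rewrite <- INR_IZR_INZ; auto.
  apply is_RInt_sinZ.
Qed.

Lemma contR_mult (f g : R -> R) x : continuous f x -> continuous g x ->
  continuous (fun y => f y * g y) x.
Proof. intros; apply (@continuous_mult R_UniformSpace R_AbsRing f g x); auto. Qed.
Lemma contR_plus (f g : R -> R) x : continuous f x -> continuous g x ->
  continuous (fun y => f y + g y) x.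
Proof. intros; apply (@continuous_plus R_UniformSpace R_AbsRing R_NormedModule f g x); auto. Qed.
Lemma cont_cosn (n : nat) x : continuous (fun y => cos (INR n * y)) x.
Proof. apply (ex_derive_continuous (fun y => cos (INR n * y))). auto_derive; auto. Qed.
Lemma cont_sinn (n : nat) x : continuous (fun y => sin (INR n * y)) x.
Proof. apply (ex_derive_continuous (fun y => sin (INR n * y))). auto_derive; auto. Qed.
Lemma exR_cont (f : R -> R) a b : (forall x, continuous f x) -> ex_RInt f a b.
Proof. intros H; apply (@ex_RInt_continuous R_CompleteNormedModule); auto. Qed.
Lemma isR_cont (f : R -> R) a b : (forall x, continuous f x) -> is_RInt f a b (RInt f a b).
Proof. intros H; apply (@RInt_correct R_CompleteNormedModule); apply exR_cont; auto. Qed.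

Lemma cont_bound (f : R -> R) a b : a <= b -> (forall x, continuous f x) ->
  exists M, forall x, a <= x <= b -> Rabs (f x) <= M.
Proof.
  intros Hab Hc.
  destruct (continuity_ab_maj (fun x => Rabs (f x)) a b Hab) as [Mx [HM _]].
  intros c _. apply continuity_pt_filterlim.
  apply (continuous_comp f Rabs). apply Hc. apply continuous_Rabs.
  exists (Rabs (f Mx)); auto.
Qed.

Lemma ibp (f f' : R -> R) (n : nat) :
  (forall x, is_derive f x (f' x)) -> (forall x, continuous f' x) ->
  f (2 * PI) = f 0 ->
  RInt (fun x => f' x * cos (INR n * x)) 0 (2 * PI) = INR n * RInt (fun x => f x * sin (INR n * x)) 0 (2 * PI)
  /\ RInt (fun x => f' x * sin (INR n * x)) 0 (2 * PI) = - INR n * RInt (fun x => f x * cos (INR n * x)) 0 (2 * PI).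
Proof.
  intros Hd Hc Hp.
  assert (Hfc : forall x, continuous f x).
  { intros x; apply (@ex_derive_continuous R_AbsRing R_NormedModule). exists (f' x); auto. }
  assert (H2 : cos (INR n * (2 * PI)) = 1).
  { rewrite INR_IZR_INZ. apply cos_2pi_Z. }
  assert (H3 : sin (INR n * (2 * PI)) = 0).
  { rewrite INR_IZR_INZ. apply sin_2pi_Z. }
  split; apply is_RInt_unique.
  - apply (isR_ext (fun x => (f' x * cos (INR n * x) - INR n * (f x * sin (INR n * x))) + INR n * (f x * sin (INR n * x)))).
    intros; ring.
    apply (isR_eq _ _ _ (0 + INR n * RInt (fun x => f x * sin (INR n * x)) 0 (2 * PI))). ring.
    apply isR_plus.
    + apply (isR_eq _ _ _ (f (2*PI) * cos (INR n * (2*PI)) - f 0 * cos (INR n * 0))).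
      rewrite H2, Rmult_0_r, cos_0, Hp; ring.
      apply (is_RInt_derive (fun x => f x * cos (INR n * x))).
      * intros x _. 
        apply (is_derive_ext (fun x => f x * cos (INR n * x))). auto.
        evar (l : R). replace (f' x * cos (INR n * x) - INR n * (f x * sin (INR n * x))) with l.
        apply (@is_derive_mult R_AbsRing). apply Hd. auto_derive; auto.
        intros; apply Rmult_comm.
        unfold l. simpl. unfold plus, mult; simpl. ring.
      * intros x _. apply (continuous_ext (fun x => f' x * cos (INR n * x) + (- INR n) * (f x * sin (INR n * x)))).
        intros; simpl; ring.
        apply contR_plus. apply contR_mult; auto; apply cont_cosn.
        apply contR_mult. apply continuous_const. apply contR_mult; auto; apply cont_sinn.
    + apply isR_scal, isR_cont. intros; apply contR_mult; auto; apply cont_sinn.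
  - apply (isR_ext (fun x => (f' x * sin (INR n * x) + INR n * (f x * cos (INR n * x))) + (- INR n) * (f x * cos (INR n * x)))).
    intros; ring.
    apply (isR_eq _ _ _ (0 + - INR n * RInt (fun x => f x * cos (INR n * x)) 0 (2 * PI))). ring.
    apply isR_plus.
    + apply (isR_eq _ _ _ (f (2*PI) * sin (INR n * (2*PI)) - f 0 * sin (INR n * 0))).
      rewrite H3, (Rmult_0_r (INR n)), sin_0; ring.
      apply (is_RInt_derive (fun x => f x * sin (INR n * x))).
      * intros x _. 
        evar (l : R). replace (f' x * sin (INR n * x) + INR n * (f x * cos (INR n * x))) with l.
        apply (@is_derive_mult R_AbsRing). apply Hd. auto_derive; auto.
        intros; apply Rmult_comm.
        unfold l. simpl. unfold plus, mult; simpl. ring.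
      * intros x _. 
        apply contR_plus. apply contR_mult; auto; apply cont_sinn.
        apply contR_mult. apply continuous_const. apply contR_mult; auto; apply cont_cosn.
    + apply isR_scal, isR_cont. intros; apply contR_mult; auto; apply cont_cosn.
Qed.


Inductive TP : (R -> R) -> Prop :=
| TP_cos n : TP (fun x => cos (INR n * x))
| TP_sin n : TP (fun x => sin (INR n * x))
| TP_add p q : TP p -> TP q -> TP (fun x => p x + q x)
| TP_scal c p : TP p -> TP (fun x => c * p x)
| TP_ext p q : TP p -> (forall x, p x = q x) -> TP q.

Lemma TP_prop (g : R -> R) :
  (forall x, continuous g x) ->
  (forall n, RInt (fun x => g x * cos (INR n * x)) 0 (2 * PI) = 0 /\
             RInt (fun x => g x * sin (INR n * x)) 0 (2 * PI) = 0) ->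
  forall p, TP p -> (forall x, continuous p x) /\ is_RInt (fun x => g x * p x) 0 (2 * PI) 0.
Proof.
  intros Hg Hc p Hp. induction Hp.
  - split. apply cont_cosn. eapply isR_eq. apply (proj1 (Hc n)). apply isR_cont.
    intros; apply contR_mult; auto; apply cont_cosn.
  - split. apply cont_sinn. eapply isR_eq. apply (proj2 (Hc n)). apply isR_cont.
    intros; apply contR_mult; auto; apply cont_sinn.
  - destruct IHHp1 as [H1 H2], IHHp2 as [H3 H4]. split.
    intros; apply contR_plus; auto.
    apply (isR_ext (fun x => g x * p x + g x * q x)). intros; ring.
    apply (isR_eq _ _ _ (0 + 0)). ring. apply isR_plus; auto.
  - destruct IHHp as [H1 H2]. split.
    intros; apply contR_mult; auto; apply continuous_const.
    apply (isR_ext (fun x => c * (g x * p x))). intros; ring.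
    apply (isR_eq _ _ _ (c * 0)). ring. apply isR_scal; auto.
  - destruct IHHp as [H1 H2]. split.
    intros; apply (continuous_ext p); auto.
    apply (isR_ext (fun x => g x * p x)). intros; rewrite H; auto. auto.
Qed.

Lemma TP_mul_cos p : TP p -> TP (fun x => p x * cos x).
Proof.
  intros Hp. induction Hp.
  - destruct n.
    + apply (TP_ext _ _ (TP_cos 1)). intros; simpl. rewrite !Rmult_1_l, Rmult_0_l, cos_0. ring.
    + apply (TP_ext _ _ (TP_scal (/2) _ (TP_add _ _ (TP_cos (S (S n))) (TP_cos n)))).
      intros x. replace (INR (S (S n)) * x) with (INR (S n) * x + x) by (rewrite !S_INR; ring).
      replace (INR n * x) with (INR (S n) * x - x) by (rewrite !S_INR; ring).
      rewrite cos_plus, cos_minus. field.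
  - destruct n.
    + apply (TP_ext _ _ (TP_scal 0 _ (TP_cos 0))). intros; simpl. rewrite !Rmult_0_l, sin_0. ring.
    + apply (TP_ext _ _ (TP_scal (/2) _ (TP_add _ _ (TP_sin (S (S n))) (TP_sin n)))).
      intros x. replace (INR (S (S n)) * x) with (INR (S n) * x + x) by (rewrite !S_INR; ring).
      replace (INR n * x) with (INR (S n) * x - x) by (rewrite !S_INR; ring).
      rewrite sin_plus, sin_minus. field.
  - apply (TP_ext _ _ (TP_add _ _ IHHp1 IHHp2)). intros; ring.
  - apply (TP_ext _ _ (TP_scal c _ IHHp)). intros; ring.
  - apply (TP_ext _ _ IHHp). intros; rewrite H; auto.
Qed.

Lemma TP_mul_sin p : TP p -> TP (fun x => p x * sin x).
Proof.
  intros Hp. induction Hp.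
  - destruct n.
    + apply (TP_ext _ _ (TP_sin 1)). intros; simpl. rewrite !Rmult_1_l, Rmult_0_l, cos_0. ring.
    + apply (TP_ext _ _ (TP_scal (/2) _ (TP_add _ _ (TP_sin (S (S n))) (TP_scal (-1) _ (TP_sin n))))).
      intros x. replace (INR (S (S n)) * x) with (INR (S n) * x + x) by (rewrite !S_INR; ring).
      replace (INR n * x) with (INR (S n) * x - x) by (rewrite !S_INR; ring).
      rewrite sin_plus, sin_minus. field.
  - destruct n.
    + apply (TP_ext _ _ (TP_scal 0 _ (TP_cos 0))). intros; simpl. rewrite !Rmult_0_l, sin_0. ring.
    + apply (TP_ext _ _ (TP_scal (/2) _ (TP_add _ _ (TP_cos n) (TP_scal (-1) _ (TP_cos (S (S n))))))).
      intros x. replace (INR (S (S n)) * x) with (INR (S n) * x + x) by (rewrite !S_INR; ring).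
      replace (INR n * x) with (INR (S n) * x - x) by (rewrite !S_INR; ring).
      rewrite cos_plus, cos_minus. field.
  - apply (TP_ext _ _ (TP_add _ _ IHHp1 IHHp2)). intros; ring.
  - apply (TP_ext _ _ (TP_scal c _ IHHp)). intros; ring.
  - apply (TP_ext _ _ IHHp). intros; rewrite H; auto.
Qed.

Lemma TP_kernel x0 k : TP (fun x => (1 + cos (x - x0)) ^ k).
Proof.
  induction k.
  - apply (TP_ext _ _ (TP_cos 0)). intros; simpl. rewrite Rmult_0_l, cos_0; auto.
  - apply (TP_ext _ _ (TP_add _ _ IHk (TP_add _ _ (TP_scal (cos x0) _ (TP_mul_cos _ IHk))
                                                 (TP_scal (sin x0) _ (TP_mul_sin _ IHk))))).
    intros x. rewrite cos_minus. simpl. ring.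
Qed.

Lemma chas (f : R -> R) a b c : (forall x, continuous f x) ->
  RInt f a c = RInt f a b + RInt f b c.
Proof. intros H. symmetry. apply (@RInt_Chasles R_CompleteNormedModule); apply exR_cont; auto. Qed.

Lemma lowb (f : R -> R) a b m : a <= b -> (forall x, continuous f x) ->
  (forall x, a <= x <= b -> m <= f x) -> (b - a) * m <= RInt f a b.
Proof.
  intros Hab Hc Hm.
  replace ((b - a) * m) with (RInt (fun _ => m) a b).
  apply RInt_le; auto. apply exR_cont; intros; apply continuous_const.
  apply exR_cont; auto. intros x Hx; apply Hm; lra.
  rewrite RInt_const. reflexivity.
Qed.

Lemma cos_2PI_minus v : cos (2 * PI - v) = cos v.
Proof. rewrite cos_minus, cos_2PI, sin_2PI. ring. Qed.

Lemma cos_far d v : 0 < d <= PI -> d <= v <= 2 * PI - d -> cos v <= cos d.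
Proof.
  intros Hd Hv. destruct (Rle_lt_dec v PI).
  - apply cos_decr_1; lra.
  - rewrite <- cos_2PI_minus. apply cos_decr_1; lra.
Qed.

Lemma conc (h : R -> R) x0 : (forall x, continuous h x) -> 0 < x0 < 2 * PI -> 0 < h x0 ->
  (forall k, is_RInt (fun x => h x * (1 + cos (x - x0)) ^ k) 0 (2 * PI) 0) -> False.
Proof.
  intros Hc Hx0 Hh HI.
  assert (HPI : 3 < PI) by (pose proof PI2_3_2; lra).
  destruct (proj1 (@filterlim_locally _ _ (locally x0) _ h (h x0)) (Hc x0) (mkposreal (h x0 / 2) ltac:(lra)))
    as [del Hdel].
  assert (Hnear : forall y, Rabs (y - x0) < del -> h x0 / 2 < h y).
  { intros y Hy. specialize (Hdel y Hy). simpl in Hdel.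
    unfold ball in Hdel; simpl in Hdel; unfold AbsRing_ball, abs, minus, plus, opp in Hdel; simpl in Hdel.
    apply Rabs_lt_between in Hdel. lra. }
  set (d := Rmin (del / 2) (Rmin (x0 / 2) (Rmin ((2 * PI - x0) / 2) 1))).
  assert (Hd1 : 0 < d).
  { unfold d. pose proof (cond_pos del). repeat apply Rmin_glb_lt; lra. }
  assert (Hd2 : d < del).
  { unfold d. pose proof (cond_pos del). eapply Rle_lt_trans. apply Rmin_l. lra. }
  assert (Hd3 : d < x0).
  { unfold d. eapply Rle_lt_trans. eapply Rle_trans. apply Rmin_r. apply Rmin_l. lra. }
  assert (Hd4 : d < 2 * PI - x0).
  { unfold d. eapply Rle_lt_trans. eapply Rle_trans. apply Rmin_r. eapply Rle_trans. apply Rmin_r. apply Rmin_l. lra. }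
  assert (Hd5 : d <= 1).
  { unfold d. eapply Rle_trans. apply Rmin_r. eapply Rle_trans. apply Rmin_r. apply Rmin_r. }
  destruct (cont_bound h 0 (2 * PI) ltac:(lra) Hc) as [M HM].
  assert (HM0 : 0 <= M). { specialize (HM x0 ltac:(lra)). pose proof (Rabs_pos (h x0)). lra. }
  set (c := h x0 / 2).
  set (r1 := 1 + cos (d / 2)). set (r2 := 1 + cos d).
  assert (Hr2 : 0 < r2).
  { unfold r2. assert (cos PI < cos d) by (apply cos_decreasing_1; lra). rewrite cos_PI in H. lra. }
  assert (Hr12 : r2 < r1).
  { unfold r1, r2. assert (cos d < cos (d / 2)) by (apply cos_decreasing_1; lra). lra. }
  destruct (Pow_x_infinity (r1 / r2)) with (b := 2 * PI * M / (d * c) + 1) as [k Hk].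
  { rewrite Rabs_right. apply (Rmult_lt_reg_r r2); auto. field_simplify; lra.
    apply Rle_ge, Rlt_le, Rdiv_lt_0_compat; lra. }
  specialize (Hk k (le_n k)).
  rewrite Rabs_right in Hk by (apply Rle_ge, pow_le, Rlt_le, Rdiv_lt_0_compat; lra).
  set (F := fun x => h x * (1 + cos (x - x0)) ^ k).
  assert (HF : forall x, continuous F x).
  { intros x. apply contR_mult; auto.
    apply (ex_derive_continuous (fun x => (1 + cos (x - x0)) ^ k)). auto_derive; auto. }
  assert (Hzero : RInt F 0 (2 * PI) = 0) by (apply is_RInt_unique; apply HI).
  assert (Kpos : forall x, 0 <= (1 + cos (x - x0)) ^ k).
  { intros x; apply pow_le. pose proof (COS_bound (x - x0)). lra. }
  assert (Far : forall x, 0 <= x <= 2 * PI -> (x <= x0 - d \/ x0 + d <= x) -> - (M * r2 ^ k) <= F x).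
  { intros x Hx Hfar. unfold F.
    assert (Hk1 : (1 + cos (x - x0)) ^ k <= r2 ^ k).
    { apply pow_incr. split. pose proof (COS_bound (x - x0)); lra.
      unfold r2. apply Rplus_le_compat_l.
      destruct Hfar.
      - rewrite <- (cos_neg (x - x0)). apply cos_far; lra.
      - apply cos_far; lra. }
    specialize (HM x Hx). specialize (Kpos x).
    assert (Rabs (h x * (1 + cos (x - x0)) ^ k) <= M * r2 ^ k).
    { rewrite Rabs_mult, (Rabs_right ((1 + cos (x - x0)) ^ k)) by lra.
      apply Rmult_le_compat; auto using Rabs_pos. }
    apply Rabs_le_between in H. lra. }
  assert (Mid : forall x, x0 - d <= x <= x0 + d -> 0 <= F x).
  { intros x Hx. unfold F. apply Rmult_le_pos; auto.
    assert (c < h x) by (apply Hnear; apply Rabs_def1; lra). unfold c in *. lra. }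
  assert (Cen : forall x, x0 - d / 2 <= x <= x0 + d / 2 -> c * r1 ^ k <= F x).
  { intros x Hx. unfold F.
    assert (c < h x) by (apply Hnear; apply Rabs_def1; lra).
    assert (r1 ^ k <= (1 + cos (x - x0)) ^ k).
    { apply pow_incr. split. pose proof (COS_bound (d/2)); unfold r1; lra.
      unfold r1. apply Rplus_le_compat_l.
      destruct (Rle_lt_dec 0 (x - x0)).
      - apply cos_decr_1; lra.
      - rewrite <- (cos_neg (x - x0)). apply cos_decr_1; lra. }
    apply Rmult_le_compat; try lra. unfold c; lra. apply pow_le; unfold r1; pose proof (COS_bound (d/2)); lra. }
  rewrite (chas F 0 (x0 - d) (2 * PI)), (chas F (x0 - d) (x0 - d / 2) (2 * PI)),
    (chas F (x0 - d / 2) (x0 + d / 2) (2 * PI)), (chas F (x0 + d / 2) (x0 + d) (2 * PI)) in Hzero; auto.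
  assert (I1 := lowb F 0 (x0 - d) (- (M * r2 ^ k)) ltac:(lra) HF ltac:(intros; apply Far; lra)).
  assert (I2 := lowb F (x0 - d) (x0 - d / 2) 0 ltac:(lra) HF ltac:(intros; apply Mid; lra)).
  assert (I3 := lowb F (x0 - d / 2) (x0 + d / 2) (c * r1 ^ k) ltac:(lra) HF Cen).
  assert (I4 := lowb F (x0 + d / 2) (x0 + d) 0 ltac:(lra) HF ltac:(intros; apply Mid; lra)).
  assert (I5 := lowb F (x0 + d) (2 * PI) (- (M * r2 ^ k)) ltac:(lra) HF ltac:(intros; apply Far; lra)).
  assert (Hr2k : 0 < r2 ^ k) by (apply pow_lt; auto).
  assert (Hbig : 2 * PI * M * r2 ^ k < d * c * r1 ^ k).
  { replace (r1 ^ k) with ((r1 / r2) ^ k * r2 ^ k) by (rewrite <- Rpow_mult_distr; f_equal; field; lra).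
    assert (0 < d * c) by (unfold c; apply Rmult_lt_0_compat; lra).
    assert (d * c * (2 * PI * M / (d * c) + 1) <= d * c * (r1 / r2) ^ k) . { apply Rmult_le_compat_l. lra. apply Rge_le; exact Hk. }
    replace (d * c * (2 * PI * M / (d * c) + 1)) with (2 * PI * M + d * c) in H0 by (field; unfold c; lra).
    nra. }
  set (P := M * r2 ^ k) in *. set (Q := c * r1 ^ k) in *.
  assert (HP : 0 <= P) by (unfold P; apply Rmult_le_pos; lra).
  assert (HdP : 0 <= d * P) by (apply Rmult_le_pos; lra).
  replace ((x0 - d - 0) * - P) with (- (x0 * P) + d * P) in I1 by ring.
  replace ((2 * PI - (x0 + d)) * - P) with (- (2 * PI * P) + x0 * P + d * P) in I5 by ring.
  replace ((x0 + d / 2 - (x0 - d / 2)) * Q) with (d * Q) in I3 by field.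
  replace ((x0 - d / 2 - (x0 - d)) * 0) with 0 in I2 by ring.
  replace ((x0 + d - (x0 + d / 2)) * 0) with 0 in I4 by ring.
  replace (2 * PI * M * r2 ^ k) with (2 * PI * P) in Hbig by (unfold P; ring).
  replace (d * c * r1 ^ k) with (d * Q) in Hbig by (unfold Q; ring).
  lra.
Qed.

Lemma per_nat (g : R -> R) : (forall x, g (x + 2 * PI) = g x) ->
  forall n y, g (y + INR n * (2 * PI)) = g y.
Proof.
  intros Hp n. induction n; intros y.
  - simpl. rewrite Rmult_0_l, Rplus_0_r; auto.
  - rewrite S_INR. replace (y + (INR n + 1) * (2 * PI)) with ((y + INR n * (2 * PI)) + 2 * PI) by ring.
    rewrite Hp; auto.
Qed.

Lemma per_Z (g : R -> R) : (forall x, g (x + 2 * PI) = g x) ->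
  forall z y, g (y + IZR z * (2 * PI)) = g y.
Proof.
  intros Hp z y. destruct z.
  - simpl. rewrite Rmult_0_l, Rplus_0_r; auto.
  - rewrite <- positive_nat_Z, <- INR_IZR_INZ. apply per_nat; auto.
  - rewrite <- Pos2Z.opp_pos, opp_IZR, <- positive_nat_Z, <- INR_IZR_INZ.
    rewrite <- (per_nat g Hp (Pos.to_nat p) (y + - INR (Pos.to_nat p) * (2 * PI))).
    f_equal. ring.
Qed.

Lemma const_of_coefs (g : R -> R) :
  (forall x, continuous g x) -> (forall x, g (x + 2 * PI) = g x) ->
  (forall n, RInt (fun x => g x * cos (INR n * x)) 0 (2 * PI) = 0 /\
             RInt (fun x => g x * sin (INR n * x)) 0 (2 * PI) = 0) ->
  forall x, g x = 0.
Proof.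
  intros Hc Hp Hcoef.
  assert (HPI : 3 < PI) by (pose proof PI2_3_2; lra).
  assert (Hin : forall x0, 0 < x0 < 2 * PI -> g x0 = 0).
  { intros x0 Hx0. destruct (Rtotal_order (g x0) 0) as [Hl|[He|Hg]]; auto; exfalso.
    - apply (conc (fun x => - g x) x0); auto.
      + intros x. apply (continuous_ext (fun x => (-1) * g x)). intros; simpl; ring.
        apply contR_mult; auto. apply continuous_const.
      + lra.
      + intros k. apply (isR_ext (fun x => - (g x * (1 + cos (x - x0)) ^ k))). intros; ring.
        apply (isR_eq _ _ _ (- 0)). ring. apply isR_opp.
        apply (TP_prop g Hc Hcoef _ (TP_kernel x0 k)).
    - apply (conc g x0); auto.
      intros k. apply (TP_prop g Hc Hcoef _ (TP_kernel x0 k)). }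
  assert (H0 : g 0 = 0).
  { destruct (Req_dec (g 0) 0) as [|Hn]; auto. exfalso.
    assert (Hpos : 0 < Rabs (g 0)) by (apply Rabs_pos_lt; auto).
    destruct (proj1 (@filterlim_locally _ _ (locally 0) _ g (g 0)) (Hc 0) (mkposreal _ Hpos))
      as [del Hdel].
    set (y := Rmin (del / 2) 1).
    assert (Hy : 0 < y <= 1).
    { unfold y. split. apply Rmin_glb_lt; [pose proof (cond_pos del)|]; lra. apply Rmin_r. }
    assert (Hyd : y < del).
    { unfold y. eapply Rle_lt_trans. apply Rmin_l. pose proof (cond_pos del); lra. }
    specialize (Hdel y).
    assert (Hb : ball 0 del y).
    { unfold ball; simpl; unfold AbsRing_ball, abs, minus, plus, opp; simpl.
      rewrite Ropp_0, Rplus_0_r, Rabs_right; lra. }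
    specialize (Hdel Hb). unfold ball in Hdel; simpl in Hdel;
    unfold AbsRing_ball, abs, minus, plus, opp in Hdel; simpl in Hdel.
    rewrite Hin in Hdel by lra. rewrite Rplus_0_l, Rabs_Ropp in Hdel. lra. }
  intros x.
  set (z := Int_part (x / (2 * PI))).
  destruct (base_Int_part (x / (2 * PI))) as [B1 B2]. fold z in B1, B2.
  set (y := x - IZR z * (2 * PI)).
  assert (Hy : 0 <= y < 2 * PI).
  { unfold y. assert (0 < 2 * PI) by lra.
    assert (IZR z * (2 * PI) <= x).
    { apply (Rmult_le_compat_r (2 * PI)) in B1; try lra. field_simplify in B1; lra. }
    assert (x < IZR z * (2 * PI) + 2 * PI).
    { assert (x / (2 * PI) < IZR z + 1) by lra.
      apply (Rmult_lt_compat_r (2 * PI)) in H2; try lra. field_simplify in H2; lra. }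
    lra. }
  replace x with (y + IZR z * (2 * PI)) by (unfold y; ring).
  rewrite per_Z; auto.
  destruct (Req_dec y 0) as [->|]; auto. apply Hin; lra.
Qed.


Definition Ca (a : R -> R) (n : nat) : R := RInt (fun x => a x * cos (INR n * x)) 0 (2 * PI).
Definition Sa (a : R -> R) (n : nat) : R := RInt (fun x => a x * sin (INR n * x)) 0 (2 * PI).

Lemma decay (f0 f1 f2 f3 : R -> R) :
  (forall x, is_derive f0 x (f1 x)) -> (forall x, is_derive f1 x (f2 x)) ->
  (forall x, is_derive f2 x (f3 x)) -> (forall x, continuous f3 x) ->
  f0 (2 * PI) = f0 0 -> f1 (2 * PI) = f1 0 -> f2 (2 * PI) = f2 0 ->
  exists K, 0 <= K /\ forall n, (1 <= n)%nat -> Rabs (Ca f0 n) + Rabs (Sa f0 n) <= K / INR n ^ 3.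
Proof.
  intros D0 D1 D2 C3 P0 P1 P2.
  assert (C2 : forall x, continuous f2 x).
  { intros x; apply (@ex_derive_continuous R_AbsRing R_NormedModule). exists (f3 x); auto. }
  assert (C1 : forall x, continuous f1 x).
  { intros x; apply (@ex_derive_continuous R_AbsRing R_NormedModule). exists (f2 x); auto. }
  assert (Hstep : forall (f f' : R -> R) n, (1 <= n)%nat ->
    (forall x, is_derive f x (f' x)) -> (forall x, continuous f' x) -> f (2 * PI) = f 0 ->
    Rabs (Ca f n) + Rabs (Sa f n) = / INR n * (Rabs (Ca f' n) + Rabs (Sa f' n))).
  { intros f f' n Hn Hd Hc Hp. destruct (ibp f f' n Hd Hc Hp) as [E1 E2].
    unfold Ca, Sa. rewrite E1, E2.
    assert (0 < INR n) by (apply lt_0_INR; lia).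
    rewrite !Rabs_mult, Rabs_Ropp, (Rabs_right (INR n)) by lra. field. lra. }
  destruct (cont_bound f3 0 (2 * PI) ltac:(pose proof PI_RGT_0; lra) C3) as [M HM].
  exists (2 * (2 * PI * M)). split.
  { specialize (HM 0 ltac:(pose proof PI_RGT_0; lra)). pose proof (Rabs_pos (f3 0)). pose proof PI_RGT_0. nra. }
  intros n Hn.
  rewrite (Hstep f0 f1), (Hstep f1 f2), (Hstep f2 f3); auto.
  assert (B1 : Rabs (Ca f3 n) <= (2 * PI - 0) * M).
  { apply abs_RInt_le_const. pose proof PI_RGT_0; lra.
    apply exR_cont; intros; apply contR_mult; auto; apply cont_cosn.
    intros t Ht. rewrite Rabs_mult. specialize (HM t Ht).
    pose proof (Rabs_pos (f3 t)). pose proof (COS_bound (INR n * t)).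
    assert (Rabs (cos (INR n * t)) <= 1) by (apply Rabs_le; lra). nra. }
  assert (B2 : Rabs (Sa f3 n) <= (2 * PI - 0) * M).
  { apply abs_RInt_le_const. pose proof PI_RGT_0; lra.
    apply exR_cont; intros; apply contR_mult; auto; apply cont_sinn.
    intros t Ht. rewrite Rabs_mult. specialize (HM t Ht).
    pose proof (Rabs_pos (f3 t)). pose proof (SIN_bound (INR n * t)).
    assert (Rabs (sin (INR n * t)) <= 1) by (apply Rabs_le; lra). nra. }
  assert (0 < INR n) by (apply lt_0_INR; lia).
  replace (2 * (2 * PI * M) / INR n ^ 3) with (/ INR n * (/ INR n * (/ INR n * (2 * (2 * PI * M))))) by (field; lra).
  assert (0 < / INR n) by (apply Rinv_0_lt_compat; lra).
  repeat (apply Rmult_le_compat_l; [lra|]). lra.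
Qed.

Lemma decay_series (T : nat -> R) K :
  0 <= K -> (forall n, 0 <= T n) -> (forall n, (1 <= n)%nat -> T n <= K / INR n ^ 3) ->
  ex_series (fun n => INR n * T n) /\ ex_series T.
Proof.
  intros HK HT Hb.
  assert (E1 : ex_series (fun n => INR n * T n)).
  { apply ex_series_incr_1.
    apply (@ex_series_le R_AbsRing R_CompleteNormedModule _ (fun k => 2 * K * / ((INR k + 1) * (INR k + 2)))).
    - intros k. change (Rabs (INR (S k) * T (S k)) <= 2 * K * / ((INR k + 1) * (INR k + 2))). rewrite S_INR.
      assert (0 <= INR k) by apply pos_INR.
      specialize (Hb (S k) ltac:(lia)). rewrite S_INR in Hb. specialize (HT (S k)).
      rewrite Rabs_right by (apply Rle_ge, Rmult_le_pos; lra).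
      apply Rle_trans with ((INR k + 1) * (K / (INR k + 1) ^ 3)).
      apply Rmult_le_compat_l; lra.
      replace ((INR k + 1) * (K / (INR k + 1) ^ 3)) with (K / ((INR k + 1) * (INR k + 1))) by (field; lra).
      unfold Rdiv. replace (2 * K * / ((INR k + 1) * (INR k + 2))) with (K * (2 / ((INR k + 1) * (INR k + 2)))) by (field; lra).
      apply Rmult_le_compat_l; auto.
      apply (Rmult_le_reg_r ((INR k + 1) * (INR k + 1) * (INR k + 2))). nra.
      field_simplify; nra.
    - apply (@ex_series_scal R_AbsRing R_NormedModule (2 * K) _ ex_series_tele). }
  split; auto.
  apply ex_series_incr_1. apply ex_series_incr_1 in E1.
  apply (@ex_series_le R_AbsRing R_CompleteNormedModule _ (fun n => INR (S n) * T (S n))); auto.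
  intros k. change (Rabs (T (S k)) <= INR (S k) * T (S k)). rewrite Rabs_right by (apply Rle_ge; auto).
  rewrite S_INR. specialize (HT (S k)). pose proof (pos_INR k). nra.
Qed.


Lemma RInt_neg_fun (f : R -> R) a b : (forall x, continuous f x) -> RInt (fun x => - f x) a b = - RInt f a b.
Proof. intros H. exact (@RInt_opp R_CompleteNormedModule f a b (exR_cont f a b H)). Qed.

Lemma fcoef_pos a n : (forall x, continuous a x) -> fcoef (toC a) (Z.of_nat n) = (/ (2 * PI) * Ca a n, - (/ (2 * PI) * Sa a n)).
Proof.
  intros Hc.
  unfold fcoef, CInt, Ca, Sa, toC, cexpi, Cmult, RtoC. simpl.
  rewrite <- INR_IZR_INZ.
  rewrite (RInt_ext (fun x => a x * cos (- INR n * x) - 0 * sin (- INR n * x)) (fun x => a x * cos (INR n * x)))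
    by (intros; simpl; rewrite Ropp_mult_distr_l_reverse, cos_neg; ring).
  rewrite (RInt_ext (fun x => a x * sin (- INR n * x) + 0 * cos (- INR n * x)) (fun x => - (a x * sin (INR n * x))))
    by (intros; simpl; rewrite Ropp_mult_distr_l_reverse, sin_neg; ring).
  rewrite RInt_neg_fun. f_equal; ring. intros; apply contR_mult; auto; apply cont_sinn.
Qed.

Lemma fcoef_neg a n : fcoef (toC a) (- Z.of_nat n) = (/ (2 * PI) * Ca a n, / (2 * PI) * Sa a n).
Proof.
  unfold fcoef, CInt, Ca, Sa, toC, cexpi, Cmult, RtoC. simpl.
  rewrite opp_IZR, <- INR_IZR_INZ.
  rewrite (RInt_ext (fun x => a x * cos (- - INR n * x) - 0 * sin (- - INR n * x)) (fun x => a x * cos (INR n * x)))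
    by (intros; simpl; rewrite Ropp_involutive; ring).
  rewrite (RInt_ext (fun x => a x * sin (- - INR n * x) + 0 * cos (- - INR n * x)) (fun x => a x * sin (INR n * x)))
    by (intros; simpl; rewrite Ropp_involutive; ring).
  f_equal; ring.
Qed.


Definition Ac a n : R := / (2 * PI) * Ca a n.
Definition Bc a n : R := / (2 * PI) * Sa a n.

Lemma Lam_fst a th : (forall x, continuous a x) ->
  fst (Lam (toC a) th) = Series (fun n => INR n * (2 * (Ac a n * cos (INR n * th) + Bc a n * sin (INR n * th)))).
Proof.
  intros Hc. unfold Lam, CSeries. cbn [Re Im fst]. apply Series_ext. intros n.
  rewrite fcoef_pos, fcoef_neg by auto. unfold cexpi, Ac, Bc, Cmult, Cplus, RtoC. cbn [Re Im fst snd].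
  rewrite !(Ropp_mult_distr_l_reverse (INR n) th), cos_neg, sin_neg. ring.
Qed.

Lemma Lam_snd a th : (forall x, continuous a x) -> snd (Lam (toC a) th) = 0.
Proof.
  intros Hc. unfold Lam, CSeries. cbn [Re Im snd]. rewrite <- Series_zero. apply Series_ext. intros n.
  rewrite fcoef_pos, fcoef_neg by auto. unfold cexpi, Ac, Bc, Cmult, Cplus, RtoC. cbn [Re Im fst snd].
  rewrite !(Ropp_mult_distr_l_reverse (INR n) th), cos_neg, sin_neg. ring.
Qed.

Lemma Hil_snd a th : (forall x, continuous a x) ->
  snd (Hil (toC a) th) = Series (fun n => 2 * (Ac a n * sin (INR n * th) - Bc a n * cos (INR n * th))).
Proof.
  intros Hc. unfold Hil, CSeries. cbn [Re Im snd]. apply Series_ext. intros n.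
  rewrite fcoef_pos, fcoef_neg by auto. unfold cexpi, Ac, Bc, Cmult, Cminus, Cplus, Copp, RtoC. cbn [Re Im fst snd].
  rewrite !(Ropp_mult_distr_l_reverse (INR n) th), cos_neg, sin_neg. ring.
Qed.

Lemma Dop_fst a th : fst (Dop (toC a) th) = 0.
Proof. unfold Dop, CDerive, toC, RtoC, Cmult. simpl. rewrite Derive_const. try change (fun t : R => a t) with a. ring. Qed.
Lemma Dop_snd a th : snd (Dop (toC a) th) = - Derive a th.
Proof. unfold Dop, CDerive, toC, RtoC, Cmult. simpl. rewrite Derive_const. try change (fun t : R => a t) with a. ring. Qed.

Lemma RHS_fst u L H D :
  fst (Cplus (Copp (Cmult (RtoC u) L)) (Cmult H D)) = - (u * fst L - 0 * snd L) + (fst H * fst D - snd H * snd D).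
Proof. destruct L, H, D. unfold Cplus, Copp, Cmult, RtoC. simpl. ring. Qed.

Lemma pos_fst a th : (forall x, continuous a x) ->
  fst (pos_part (toC a) th) = Ac a 0 / 2 +
    Series (fun m => Ac a (S m) * cos (INR (S m) * th) + Bc a (S m) * sin (INR (S m) * th)).
Proof.
  intros Hc. unfold pos_part, CSeries.
  change 0%Z with (Z.of_nat 0). rewrite fcoef_pos by auto.
  unfold Cplus, Cmult, RtoC. cbn [Re Im fst]. f_equal. cbn [fst snd]. unfold Ac; field. apply PI_neq0.
  apply Series_ext; intros m. rewrite fcoef_pos by auto. unfold cexpi, Ac, Bc. cbn [Re Im fst snd]. ring.
Qed.

Lemma pos_snd a th : (forall x, continuous a x) ->
  snd (pos_part (toC a) th) = - Bc a 0 / 2 +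
    Series (fun m => Ac a (S m) * sin (INR (S m) * th) - Bc a (S m) * cos (INR (S m) * th)).
Proof.
  intros Hc. unfold pos_part, CSeries.
  change 0%Z with (Z.of_nat 0). rewrite fcoef_pos by auto.
  unfold Cplus, Cmult, RtoC. cbn [Re Im snd]. f_equal. cbn [fst snd]. unfold Bc; field. apply PI_neq0.
  apply Series_ext; intros m. rewrite fcoef_pos by auto. unfold cexpi, Ac, Bc. cbn [Re Im fst snd]. ring.
Qed.


Lemma PIpos : 0 < PI. Proof. exact PI_RGT_0. Qed.

Lemma Ca_eq a n : Ca a n = 2 * PI * Ac a n.
Proof. unfold Ac. field. apply PI_neq0. Qed.
Lemma Sa_eq a n : Sa a n = 2 * PI * Bc a n.
Proof. unfold Bc. field. apply PI_neq0. Qed.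

Lemma isR_Ca a n : (forall x, continuous a x) ->
  is_RInt (fun x => a x * cos (INR n * x)) 0 (2 * PI) (Ca a n).
Proof. intros; apply isR_cont; intros; apply contR_mult; auto; apply cont_cosn. Qed.
Lemma isR_Sa a n : (forall x, continuous a x) ->
  is_RInt (fun x => a x * sin (INR n * x)) 0 (2 * PI) (Sa a n).
Proof. intros; apply isR_cont; intros; apply contR_mult; auto; apply cont_sinn. Qed.

Lemma trig_bound A B y : Rabs (A * cos y + B * sin y) <= Rabs A + Rabs B.
Proof.
  eapply Rle_trans. apply Rabs_triang. rewrite !Rabs_mult.
  pose proof (COS_bound y). pose proof (SIN_bound y).
  assert (Rabs (cos y) <= 1) by (apply Rabs_le; lra).
  assert (Rabs (sin y) <= 1) by (apply Rabs_le; lra).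
  pose proof (Rabs_pos A). pose proof (Rabs_pos B). pose proof (Rabs_pos (cos y)). pose proof (Rabs_pos (sin y)). nra.
Qed.
Lemma trig_bound2 A B y : Rabs (A * sin y - B * cos y) <= Rabs A + Rabs B.
Proof.
  replace (A * sin y - B * cos y) with ((- B) * cos y + A * sin y) by ring.
  rewrite (Rplus_comm (Rabs A)), <- (Rabs_Ropp B). apply trig_bound.
Qed.

Section Main.
Variable a a1 : R -> R.
Hypothesis Hc : forall x, continuous a x.
Hypothesis Hd : forall x, is_derive a x (a1 x).
Hypothesis Hc1 : forall x, continuous a1 x.
Hypothesis Hp : a (2 * PI) = a 0.
Hypothesis Hs1 : ex_series (fun n => INR n * (Rabs (Ac a n) + Rabs (Bc a n))).
Hypothesis Hs0 : ex_series (fun n => Rabs (Ac a n) + Rabs (Bc a n)).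

Definition Ssum := Series (fun n => INR n * (Ac a n ^ 2 + Bc a n ^ 2)).
Definition Lr th := Series (fun n => INR n * (2 * (Ac a n * cos (INR n * th) + Bc a n * sin (INR n * th)))).
Definition Hi th := Series (fun n => 2 * (Ac a n * sin (INR n * th) - Bc a n * cos (INR n * th))).

Lemma deriv_integral :
  is_RInt (fun th => - (a th * Lr th) + Hi th * a1 th) 0 (2 * PI) (- (8 * PI) * Ssum)
  /\ ex_series (fun n => INR n * (Ac a n ^ 2 + Bc a n ^ 2)).
Proof.
  pose proof PIpos.
  destruct (cont_bound a 0 (2 * PI) ltac:(lra) Hc) as [Ma HMa].
  destruct (cont_bound a1 0 (2 * PI) ltac:(lra) Hc1) as [M1 HM1].
  destruct (RInt_Series (fun n th => a th * (INR n * (2 * (Ac a n * cos (INR n * th) + Bc a n * sin (INR n * th)))))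
     (fun n => Ma * (2 * (INR n * (Rabs (Ac a n) + Rabs (Bc a n)))))
     (fun n => 4 * PI * (INR n * (Ac a n ^ 2 + Bc a n ^ 2))) 0 (2 * PI)) as [L1 L2].
  - lra.
  - intros n. apply (isR_ext (fun th => (INR n * 2 * Ac a n) * (a th * cos (INR n * th)) + (INR n * 2 * Bc a n) * (a th * sin (INR n * th)))).
    intros; ring.
    apply (isR_eq _ _ _ ((INR n * 2 * Ac a n) * Ca a n + (INR n * 2 * Bc a n) * Sa a n)).
    rewrite Ca_eq, Sa_eq; ring.
    apply isR_plus; apply isR_scal. apply isR_Ca; auto. apply isR_Sa; auto.
  - intros n x Hx. rewrite Rabs_mult. apply Rmult_le_compat; auto using Rabs_pos.
    rewrite Rabs_mult, Rabs_mult, (Rabs_right (INR n)) by (apply Rle_ge, pos_INR).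
    rewrite Rabs_right by lra. pose proof (trig_bound (Ac a n) (Bc a n) (INR n * x)).
    pose proof (pos_INR n). nra.
  - apply (@ex_series_scal R_AbsRing R_NormedModule Ma).
    apply (@ex_series_scal R_AbsRing R_NormedModule 2). auto.
  - destruct (RInt_Series (fun n th => (2 * (Ac a n * sin (INR n * th) - Bc a n * cos (INR n * th))) * a1 th)
     (fun n => (2 * (Rabs (Ac a n) + Rabs (Bc a n))) * M1)
     (fun n => - (4 * PI) * (INR n * (Ac a n ^ 2 + Bc a n ^ 2))) 0 (2 * PI)) as [H1 H2].
    + lra.
    + intros n. destruct (ibp a a1 n Hd Hc1 Hp) as [E1 E2].
      apply (isR_ext (fun th => (2 * Ac a n) * (a1 th * sin (INR n * th)) + (- 2 * Bc a n) * (a1 th * cos (INR n * th)))).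
      intros; ring.
      apply (isR_eq _ _ _ ((2 * Ac a n) * (- INR n * Ca a n) + (- 2 * Bc a n) * (INR n * Sa a n))).
      rewrite Ca_eq, Sa_eq; ring.
      apply isR_plus; apply isR_scal.
      unfold Ca; rewrite <- E2. apply isR_cont; intros; apply contR_mult; auto; apply cont_sinn.
      unfold Sa; rewrite <- E1. apply isR_cont; intros; apply contR_mult; auto; apply cont_cosn.
    + intros n x Hx. rewrite Rabs_mult. apply Rmult_le_compat; auto using Rabs_pos.
      rewrite Rabs_mult, Rabs_right by lra. pose proof (trig_bound2 (Ac a n) (Bc a n) (INR n * x)). lra.
    + apply ex_series_scal_r. apply (@ex_series_scal R_AbsRing R_NormedModule 2). auto.
    + split.
      * apply (isR_ext (fun th => - Series (fun n => a th * (INR n * (2 * (Ac a n * cos (INR n * th) + Bc a n * sin (INR n * th))))) + Series (fun n => 2 * (Ac a n * sin (INR n * th) - Bc a n * cos (INR n * th)) * a1 th))).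
        intros th. unfold Lr, Hi. rewrite Series_scal_l, Series_scal_r. auto.
        apply (isR_eq _ _ _ (- Series (fun n => 4 * PI * (INR n * (Ac a n ^ 2 + Bc a n ^ 2))) + Series (fun n => - (4 * PI) * (INR n * (Ac a n ^ 2 + Bc a n ^ 2))))).
        rewrite !Series_scal_l. unfold Ssum. ring.
        apply isR_plus; auto. apply isR_opp; auto.
      * apply (ex_series_ext (fun n => / (4 * PI) * (4 * PI * (INR n * (Ac a n ^ 2 + Bc a n ^ 2))))).
        intros; simpl; field; lra.
        apply (@ex_series_scal R_AbsRing R_NormedModule). auto.
Qed.
End Main.


Lemma Series_dshift (k : nat) (u : nat -> R) :
  Series (fun m => if Nat.eqb (S m) k then u m else 0) = match k with O => 0 | S p => u p end.
Proof.
  destruct k.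
  - transitivity (Series (fun _ : nat => 0)); [|apply Series_zero]. apply Series_ext. intros; reflexivity.
  - rewrite <- (Series_delta k (u k)). apply Series_ext. intros m.
    change (Nat.eqb (S m) (S k)) with (Nat.eqb m k).
    destruct (Nat.eqb_spec m k); subst; auto.
Qed.

Lemma Bc0 a : Bc a 0 = 0.
Proof.
  unfold Bc, Sa. rewrite (RInt_ext _ (fun _ => 0)).
  rewrite RInt_const. unfold scal; simpl; unfold mult; simpl. ring.
  intros; simpl. rewrite Rmult_0_l, sin_0. ring.
Qed.

Section Pos.
Variable a : R -> R.
Hypothesis Hc : forall x, continuous a x.
Hypothesis Hs1 : ex_series (fun n => INR n * (Rabs (Ac a n) + Rabs (Bc a n))).
Hypothesis Hs0 : ex_series (fun n => Rabs (Ac a n) + Rabs (Bc a n)).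

Let Hs0' : ex_series (fun m => Rabs (Ac a (S m)) + Rabs (Bc a (S m))).
Proof. apply (ex_series_incr_1 (fun n => Rabs (Ac a n) + Rabs (Bc a n))); auto. Qed.

Definition prf th := Ac a 0 / 2 + Series (fun m => Ac a (S m) * cos (INR (S m) * th) + Bc a (S m) * sin (INR (S m) * th)).
Definition pif th := - Bc a 0 / 2 + Series (fun m => Ac a (S m) * sin (INR (S m) * th) - Bc a (S m) * cos (INR (S m) * th)).

Lemma trig_abs1 y : Rabs (cos y) <= 1.
Proof. pose proof (COS_bound y); apply Rabs_le; lra. Qed.
Lemma trig_abs2 y : Rabs (sin y) <= 1.
Proof. pose proof (SIN_bound y); apply Rabs_le; lra. Qed.

Lemma bnd_mul (X Y : R) (M : R) : Rabs X <= M -> Rabs Y <= 1 -> Rabs (X * Y) <= M.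
Proof. intros. rewrite Rabs_mult. pose proof (Rabs_pos X). pose proof (Rabs_pos Y). nra. Qed.

Lemma P1 k : is_RInt (fun x => prf x * cos (INR k * x)) 0 (2 * PI) (PI * Ac a k).
Proof.
  pose proof PIpos.
  destruct (RInt_Series (fun m x => (Ac a (S m) * cos (INR (S m) * x) + Bc a (S m) * sin (INR (S m) * x)) * cos (INR k * x))
      (fun m => Rabs (Ac a (S m)) + Rabs (Bc a (S m)))
      (fun m => Ac a (S m) * (/ 2 * ((if Nat.eqb (S m) k then 2 * PI else 0) + (if Nat.eqb (S m + k) 0 then 2 * PI else 0))) + Bc a (S m) * 0)
      0 (2 * PI)) as [Hi _]; auto.
  - lra.
  - intros m. apply (isR_ext (fun x => Ac a (S m) * (cos (INR (S m) * x) * cos (INR k * x)) + Bc a (S m) * (sin (INR (S m) * x) * cos (INR k * x)))).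
    intros; ring. apply isR_plus; apply isR_scal. apply is_RInt_cc. apply is_RInt_sc.
  - intros m x _. apply bnd_mul. apply trig_bound. apply trig_abs1.
  - apply (isR_ext (fun x => Ac a 0 / 2 * cos (INR k * x) + Series (fun m => (Ac a (S m) * cos (INR (S m) * x) + Bc a (S m) * sin (INR (S m) * x)) * cos (INR k * x)))).
    intros x. unfold prf. rewrite Series_scal_r. ring.
    eapply isR_eq; [|apply isR_plus; [apply isR_scal, is_RInt_c | exact Hi]].
    rewrite (Series_ext _ (fun m => if Nat.eqb (S m) k then PI * Ac a (S m) else 0)).
    rewrite Series_dshift. destruct k; [change (Nat.eqb 0 0) with true | change (Nat.eqb (S k) 0) with false]; cbv beta iota; field.
    intros m. change (Nat.eqb (S m + k) 0) with false.
    destruct (Nat.eqb (S m) k); field.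
Qed.

Lemma P2 k : is_RInt (fun x => prf x * sin (INR k * x)) 0 (2 * PI) (PI * Bc a k).
Proof.
  pose proof PIpos.
  destruct (RInt_Series (fun m x => (Ac a (S m) * cos (INR (S m) * x) + Bc a (S m) * sin (INR (S m) * x)) * sin (INR k * x))
      (fun m => Rabs (Ac a (S m)) + Rabs (Bc a (S m)))
      (fun m => Ac a (S m) * 0 + Bc a (S m) * (/ 2 * ((if Nat.eqb (S m) k then 2 * PI else 0) - (if Nat.eqb (S m + k) 0 then 2 * PI else 0))))
      0 (2 * PI)) as [Hi _]; auto.
  - lra.
  - intros m. apply (isR_ext (fun x => Ac a (S m) * (cos (INR (S m) * x) * sin (INR k * x)) + Bc a (S m) * (sin (INR (S m) * x) * sin (INR k * x)))).
    intros; ring. apply isR_plus; apply isR_scal. apply is_RInt_cs. apply is_RInt_ss.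
  - intros m x _. apply bnd_mul. apply trig_bound. apply trig_abs2.
  - apply (isR_ext (fun x => Ac a 0 / 2 * sin (INR k * x) + Series (fun m => (Ac a (S m) * cos (INR (S m) * x) + Bc a (S m) * sin (INR (S m) * x)) * sin (INR k * x)))).
    intros x. unfold prf. rewrite Series_scal_r. ring.
    eapply isR_eq; [|apply isR_plus; [apply isR_scal, is_RInt_s | exact Hi]].
    rewrite (Series_ext _ (fun m => if Nat.eqb (S m) k then PI * Bc a (S m) else 0)).
    rewrite Series_dshift. destruct k; [change (Nat.eqb 0 0) with true | change (Nat.eqb (S k) 0) with false]; cbv beta iota. rewrite Bc0; ring. field.
    intros m. change (Nat.eqb (S m + k) 0) with false.
    destruct (Nat.eqb (S m) k); field.
Qed.

Lemma P3 k : is_RInt (fun x => pif x * cos (INR k * x)) 0 (2 * PI) (- (PI * Bc a k)).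
Proof.
  pose proof PIpos.
  destruct (RInt_Series (fun m x => (Ac a (S m) * sin (INR (S m) * x) - Bc a (S m) * cos (INR (S m) * x)) * cos (INR k * x))
      (fun m => Rabs (Ac a (S m)) + Rabs (Bc a (S m)))
      (fun m => Ac a (S m) * 0 - Bc a (S m) * (/ 2 * ((if Nat.eqb (S m) k then 2 * PI else 0) + (if Nat.eqb (S m + k) 0 then 2 * PI else 0))))
      0 (2 * PI)) as [Hi _]; auto.
  - lra.
  - intros m. apply (isR_ext (fun x => Ac a (S m) * (sin (INR (S m) * x) * cos (INR k * x)) - Bc a (S m) * (cos (INR (S m) * x) * cos (INR k * x)))).
    intros; ring. apply isR_minus; apply isR_scal. apply is_RInt_sc. apply is_RInt_cc.
  - intros m x _. apply bnd_mul. apply trig_bound2. apply trig_abs1.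
  - apply (isR_ext (fun x => - Bc a 0 / 2 * cos (INR k * x) + Series (fun m => (Ac a (S m) * sin (INR (S m) * x) - Bc a (S m) * cos (INR (S m) * x)) * cos (INR k * x)))).
    intros x. unfold pif. rewrite Series_scal_r. ring.
    eapply isR_eq; [|apply isR_plus; [apply isR_scal, is_RInt_c | exact Hi]].
    rewrite (Series_ext _ (fun m => if Nat.eqb (S m) k then - (PI * Bc a (S m)) else 0)).
    rewrite Series_dshift. destruct k; [change (Nat.eqb 0 0) with true | change (Nat.eqb (S k) 0) with false]; cbv beta iota. rewrite Bc0; field. field.
    intros m. change (Nat.eqb (S m + k) 0) with false.
    destruct (Nat.eqb (S m) k); field.
Qed.

Lemma P4 k : is_RInt (fun x => pif x * sin (INR k * x)) 0 (2 * PI) (match k with O => 0 | S _ => PI * Ac a k end).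
Proof.
  pose proof PIpos.
  destruct (RInt_Series (fun m x => (Ac a (S m) * sin (INR (S m) * x) - Bc a (S m) * cos (INR (S m) * x)) * sin (INR k * x))
      (fun m => Rabs (Ac a (S m)) + Rabs (Bc a (S m)))
      (fun m => Ac a (S m) * (/ 2 * ((if Nat.eqb (S m) k then 2 * PI else 0) - (if Nat.eqb (S m + k) 0 then 2 * PI else 0))) - Bc a (S m) * 0)
      0 (2 * PI)) as [Hi _]; auto.
  - lra.
  - intros m. apply (isR_ext (fun x => Ac a (S m) * (sin (INR (S m) * x) * sin (INR k * x)) - Bc a (S m) * (cos (INR (S m) * x) * sin (INR k * x)))).
    intros; ring. apply isR_minus; apply isR_scal. apply is_RInt_ss. apply is_RInt_cs.
  - intros m x _. apply bnd_mul. apply trig_bound2. apply trig_abs2.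
  - apply (isR_ext (fun x => - Bc a 0 / 2 * sin (INR k * x) + Series (fun m => (Ac a (S m) * sin (INR (S m) * x) - Bc a (S m) * cos (INR (S m) * x)) * sin (INR k * x)))).
    intros x. unfold pif. rewrite Series_scal_r. ring.
    eapply isR_eq; [|apply isR_plus; [apply isR_scal, is_RInt_s | exact Hi]].
    rewrite (Series_ext _ (fun m => if Nat.eqb (S m) k then PI * Ac a (S m) else 0)).
    rewrite Series_dshift. destruct k; [change (Nat.eqb 0 0) with true | change (Nat.eqb (S k) 0) with false]; cbv beta iota; ring.
    intros m. change (Nat.eqb (S m + k) 0) with false.
    destruct (Nat.eqb (S m) k); field.
Qed.

End Pos.


Lemma fcoef_gen (u : R -> C) n I1 I2 I3 I4 :
  is_RInt (fun x => fst (u x) * cos (INR n * x)) 0 (2 * PI) I1 ->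
  is_RInt (fun x => snd (u x) * sin (INR n * x)) 0 (2 * PI) I2 ->
  is_RInt (fun x => snd (u x) * cos (INR n * x)) 0 (2 * PI) I3 ->
  is_RInt (fun x => fst (u x) * sin (INR n * x)) 0 (2 * PI) I4 ->
  fcoef u (Z.of_nat n) = (/ (2 * PI) * (I1 + I2), / (2 * PI) * (I3 - I4)) /\
  fcoef u (- Z.of_nat n) = (/ (2 * PI) * (I1 - I2), / (2 * PI) * (I3 + I4)).
Proof.
  intros H1 H2 H3 H4. unfold fcoef, CInt, cexpi, Cmult, RtoC. cbn [Re Im fst snd].
  rewrite opp_IZR, <- INR_IZR_INZ.
  split.
  - rewrite (RInt_ext _ (fun x => fst (u x) * cos (INR n * x) + snd (u x) * sin (INR n * x))).
    rewrite (RInt_ext (fun x => fst (u x) * sin (- INR n * x) + snd (u x) * cos (- INR n * x)) (fun x => snd (u x) * cos (INR n * x) - fst (u x) * sin (INR n * x))).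
    rewrite (is_RInt_unique _ _ _ _ (isR_plus _ _ _ _ _ _ H1 H2)).
    rewrite (is_RInt_unique _ _ _ _ (isR_minus _ _ _ _ _ _ H3 H4)).
    f_equal; ring.
    intros; simpl. rewrite !(Ropp_mult_distr_l_reverse (INR n)), cos_neg, sin_neg. ring.
    intros; simpl. rewrite !(Ropp_mult_distr_l_reverse (INR n)), cos_neg, sin_neg. ring.
  - rewrite (RInt_ext _ (fun x => fst (u x) * cos (INR n * x) - snd (u x) * sin (INR n * x))).
    rewrite (RInt_ext (fun x => fst (u x) * sin (- - INR n * x) + snd (u x) * cos (- - INR n * x)) (fun x => snd (u x) * cos (INR n * x) + fst (u x) * sin (INR n * x))).
    rewrite (is_RInt_unique _ _ _ _ (isR_minus _ _ _ _ _ _ H1 H2)).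
    rewrite (is_RInt_unique _ _ _ _ (isR_plus _ _ _ _ _ _ H3 H4)).
    f_equal; ring.
    intros; simpl. rewrite Ropp_involutive. ring.
    intros; simpl. rewrite Ropp_involutive. ring.
Qed.

Lemma Series_abs_bound (g M : nat -> R) : (forall n, Rabs (g n) <= M n) -> ex_series M ->
  Rabs (Series g) <= Series M.
Proof.
  intros Hb HM. eapply Rle_trans. apply Series_Rabs.
  apply (@ex_series_le R_AbsRing R_CompleteNormedModule _ M); auto.
  intros n; change (Rabs (Rabs (g n)) <= M n). rewrite Rabs_Rabsolu; auto.
  apply Series_le; auto. intros n; split; auto using Rabs_pos.
Qed.

Section PosF.
Variable a : R -> R.
Hypothesis Hc : forall x, continuous a x.
Hypothesis Hs1 : ex_series (fun n => INR n * (Rabs (Ac a n) + Rabs (Bc a n))).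
Hypothesis Hs0 : ex_series (fun n => Rabs (Ac a n) + Rabs (Bc a n)).

Let Hs0' : ex_series (fun m => Rabs (Ac a (S m)) + Rabs (Bc a (S m))).
Proof. apply (ex_series_incr_1 (fun n => Rabs (Ac a n) + Rabs (Bc a n))); auto. Qed.

Lemma pos_eq th : pos_part (toC a) th = (prf a th, pif a th).
Proof.
  apply injective_projections.
  - rewrite pos_fst by auto. reflexivity.
  - rewrite pos_snd by auto. reflexivity.
Qed.

Lemma fcoef_pp p :
  fcoef (pos_part (toC a)) (Z.of_nat (S p)) = (Ac a (S p), - Bc a (S p)) /\
  fcoef (pos_part (toC a)) (- Z.of_nat (S p)) = (0, 0).
Proof.
  pose proof PIpos.
  destruct (fcoef_gen (pos_part (toC a)) (S p) (PI * Ac a (S p)) (PI * Ac a (S p)) (- (PI * Bc a (S p))) (PI * Bc a (S p))) as [E1 E2].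
  - apply (isR_ext (fun x => prf a x * cos (INR (S p) * x))). intros; rewrite pos_eq; auto. apply P1; auto.
  - apply (isR_ext (fun x => pif a x * sin (INR (S p) * x))). intros; rewrite pos_eq; auto. apply (P4 a Hs0 (S p)).
  - apply (isR_ext (fun x => pif a x * cos (INR (S p) * x))). intros; rewrite pos_eq; auto. apply P3; auto.
  - apply (isR_ext (fun x => prf a x * sin (INR (S p) * x))). intros; rewrite pos_eq; auto. apply P2; auto.
  - rewrite E1, E2. split; f_equal; field; lra.
Qed.

Definition Lpr th := Series (fun n => INR n * (Ac a n * cos (INR n * th) + Bc a n * sin (INR n * th))).
Definition Lpi th := Series (fun n => INR n * (Ac a n * sin (INR n * th) - Bc a n * cos (INR n * th))).

Lemma Lam_pos th : Lam (pos_part (toC a)) th = (Lpr th, Lpi th).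
Proof.
  unfold Lam, CSeries, Lpr, Lpi. f_equal; apply Series_ext; intros [|p].
  - change (INR 0) with 0. unfold Cmult, RtoC. cbn [Re Im fst snd]. ring.
  - destruct (fcoef_pp p) as [E1 E2]. rewrite E1, E2. unfold Cmult, Cplus, RtoC, cexpi. cbn [Re Im fst snd].
    rewrite !(Ropp_mult_distr_l_reverse (INR (S p))), cos_neg, sin_neg. ring.
  - change (INR 0) with 0. unfold Cmult, RtoC. cbn [Re Im fst snd]. ring.
  - destruct (fcoef_pp p) as [E1 E2]. rewrite E1, E2. unfold Cmult, Cplus, RtoC, cexpi. cbn [Re Im fst snd].
    rewrite !(Ropp_mult_distr_l_reverse (INR (S p))), cos_neg, sin_neg. ring.
Qed.

Definition Pb := Rabs (Ac a 0 / 2) + Rabs (Bc a 0 / 2) + Series (fun m => Rabs (Ac a (S m)) + Rabs (Bc a (S m))).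

Lemma prf_bound th : Rabs (prf a th) <= Pb.
Proof.
  unfold prf, Pb. eapply Rle_trans. apply Rabs_triang.
  pose proof (Rabs_pos (Bc a 0 / 2)).
  assert (Rabs (Series (fun m => Ac a (S m) * cos (INR (S m) * th) + Bc a (S m) * sin (INR (S m) * th))) <= Series (fun m => Rabs (Ac a (S m)) + Rabs (Bc a (S m)))).
  { apply Series_abs_bound; auto. intros; apply trig_bound. }
  lra.
Qed.

Lemma pif_bound th : Rabs (pif a th) <= Pb.
Proof.
  unfold pif, Pb. eapply Rle_trans. apply Rabs_triang.
  pose proof (Rabs_pos (Ac a 0 / 2)).
  replace (- Bc a 0 / 2) with (- (Bc a 0 / 2)) by field. rewrite Rabs_Ropp.
  assert (Rabs (Series (fun m => Ac a (S m) * sin (INR (S m) * th) - Bc a (S m) * cos (INR (S m) * th))) <= Series (fun m => Rabs (Ac a (S m)) + Rabs (Bc a (S m)))).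
  { apply Series_abs_bound; auto. intros; apply trig_bound2. }
  lra.
Qed.

Lemma exch (h : R -> R) (t : nat -> R -> R) (I : nat -> R) :
  (forall x, Rabs (h x) <= Pb) ->
  (forall n x, Rabs (t n x) <= INR n * (Rabs (Ac a n) + Rabs (Bc a n))) ->
  (forall n, is_RInt (fun x => h x * t n x) 0 (2 * PI) (I n)) ->
  is_RInt (fun x => h x * Series (fun n => t n x)) 0 (2 * PI) (Series I) /\ ex_series I.
Proof.
  intros Hh Ht HI. pose proof PIpos.
  destruct (RInt_Series (fun n x => h x * t n x) (fun n => Pb * (INR n * (Rabs (Ac a n) + Rabs (Bc a n)))) I 0 (2 * PI))
    as [R1 R2]; auto.
  - lra.
  - intros n x _. rewrite Rabs_mult. apply Rmult_le_compat; auto using Rabs_pos.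
  - apply (@ex_series_scal R_AbsRing R_NormedModule). auto.
  - split; auto. apply (isR_ext (fun x => Series (fun n => h x * t n x))).
    intros; rewrite Series_scal_l; auto. auto.
Qed.

Lemma tb1 n x : Rabs (INR n * (Ac a n * cos (INR n * x) + Bc a n * sin (INR n * x))) <= INR n * (Rabs (Ac a n) + Rabs (Bc a n)).
Proof. rewrite Rabs_mult, Rabs_right by (apply Rle_ge, pos_INR). apply Rmult_le_compat_l. apply pos_INR. apply trig_bound. Qed.
Lemma tb2 n x : Rabs (INR n * (Ac a n * sin (INR n * x) - Bc a n * cos (INR n * x))) <= INR n * (Rabs (Ac a n) + Rabs (Bc a n)).
Proof. rewrite Rabs_mult, Rabs_right by (apply Rle_ge, pos_INR). apply Rmult_le_compat_l. apply pos_INR. apply trig_bound2. Qed.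

Lemma lin2 (h : R -> R) n c1 c2 v1 v2 (f1 f2 : R -> R) :
  is_RInt (fun x => h x * f1 x) 0 (2 * PI) v1 -> is_RInt (fun x => h x * f2 x) 0 (2 * PI) v2 ->
  is_RInt (fun x => h x * (INR n * (c1 * f1 x + c2 * f2 x))) 0 (2 * PI) (INR n * (c1 * v1 + c2 * v2)).
Proof.
  intros H1 H2. apply (isR_ext (fun x => (INR n * c1) * (h x * f1 x) + (INR n * c2) * (h x * f2 x))).
  intros; ring. eapply isR_eq; [|apply isR_plus; apply isR_scal; eauto]. ring.
Qed.

Lemma inner_pos : inner (pos_part (toC a)) (Lam (pos_part (toC a))) = (2 * PI * Ssum a, 0).
Proof.
  pose proof PIpos.
  unfold inner, CInt. f_equal.
  - rewrite (RInt_ext _ (fun th => prf a th * Lpr th + pif a th * Lpi th)).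
    2:{ intros; cbn [Re Im]. rewrite pos_eq, Lam_pos. unfold Cmult, Cconj. cbn [Re Im fst snd]. match goal with |- @eq _ ?x ?y => change (@eq R x y) end. ring. }
    destruct (exch (prf a) (fun n x => INR n * (Ac a n * cos (INR n * x) + Bc a n * sin (INR n * x))) (fun n => INR n * (Ac a n * (PI * Ac a n) + Bc a n * (PI * Bc a n)))
       prf_bound tb1) as [X1 X2].
    { intros n. apply lin2. apply P1; auto. apply P2; auto. }
    destruct (exch (pif a) (fun n x => INR n * (Ac a n * sin (INR n * x) + - Bc a n * cos (INR n * x))) (fun n => INR n * (Ac a n * (match n with O => 0 | S _ => PI * Ac a n end) + (- Bc a n) * (- (PI * Bc a n))))
       pif_bound) as [Y1 Y2].
    { intros n x. replace (INR n * (Ac a n * sin (INR n * x) - Bc a n * cos (INR n * x))) with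
        (INR n * (Ac a n * sin (INR n * x) + - Bc a n * cos (INR n * x))) by ring.
      rewrite <- Rabs_Ropp.
      replace (- (INR n * (Ac a n * sin (INR n * x) + - Bc a n * cos (INR n * x)))) with
        (- (INR n * (Ac a n * sin (INR n * x) - Bc a n * cos (INR n * x)))) by ring.
      rewrite Rabs_Ropp. apply tb2. }
    { intros n. apply lin2. apply (P4 a Hs0 n). apply P3; auto. }
    assert (Y1' : is_RInt (fun th => pif a th * Lpi th) 0 (2 * PI) (Series (fun n => INR n * (Ac a n * (match n with O => 0 | S _ => PI * Ac a n end) + (- Bc a n) * (- (PI * Bc a n)))))).
    { eapply isR_ext; [|exact Y1]. intros x. unfold Lpi. f_equal. apply Series_ext. intros; ring. }
    change (fun th => prf a th * Lpr th + pif a th * Lpi th) with (fun th => prf a th * Series (fun n => INR n * (Ac a n * cos (INR n * th) + Bc a n * sin (INR n * th))) + pif a th * Lpi th).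
    rewrite (is_RInt_unique _ _ _ _ (isR_plus _ _ _ _ _ _ X1 Y1')).
    rewrite <- Series_plus by auto. unfold Ssum. rewrite <- Series_scal_l.
    apply Series_ext. intros [|p]. change (INR 0) with 0. ring. ring.
  - rewrite (RInt_ext _ (fun th => pif a th * Lpr th - prf a th * Lpi th)).
    2:{ intros; cbn [Re Im]. rewrite pos_eq, Lam_pos. unfold Cmult, Cconj. cbn [Re Im fst snd]. match goal with |- @eq _ ?x ?y => change (@eq R x y) end. ring. }
    destruct (exch (pif a) (fun n x => INR n * (Ac a n * cos (INR n * x) + Bc a n * sin (INR n * x))) (fun n => INR n * (Ac a n * (- (PI * Bc a n)) + Bc a n * (match n with O => 0 | S _ => PI * Ac a n end)))
       pif_bound tb1) as [X1 X2].
    { intros n. apply lin2. apply P3; auto. apply (P4 a Hs0 n). }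
    destruct (exch (prf a) (fun n x => INR n * (Ac a n * sin (INR n * x) + - Bc a n * cos (INR n * x))) (fun n => INR n * (Ac a n * (PI * Bc a n) + (- Bc a n) * (PI * Ac a n)))
       prf_bound) as [Y1 Y2].
    { intros n x. replace (INR n * (Ac a n * sin (INR n * x) + - Bc a n * cos (INR n * x))) with
        (INR n * (Ac a n * sin (INR n * x) - Bc a n * cos (INR n * x))) by ring. apply tb2. }
    { intros n. apply lin2. apply P2; auto. apply P1; auto. }
    assert (Y1' : is_RInt (fun th => prf a th * Lpi th) 0 (2 * PI) (Series (fun n => INR n * (Ac a n * (PI * Bc a n) + (- Bc a n) * (PI * Ac a n))))).
    { eapply isR_ext; [|exact Y1]. intros x. unfold Lpi. f_equal. apply Series_ext. intros; ring. }
    change (fun th => pif a th * Lpr th - prf a th * Lpi th) with (fun th => pif a th * Series (fun n => INR n * (Ac a n * cos (INR n * th) + Bc a n * sin (INR n * th))) - prf a th * Lpi th).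
    rewrite (is_RInt_unique _ _ _ _ (isR_minus _ _ _ _ _ _ X1 Y1')).
    rewrite <- Series_minus by auto.
    transitivity (Series (fun _ : nat => 0)); [|apply Series_zero].
    apply Series_ext. intros [|p]. change (INR 0) with 0. ring. ring.
Qed.

End PosF.


Lemma cont2_snd (f : R -> R -> R) x y : continuous2_at f x y -> continuous (fun v => f x v) y.
Proof.
  intros H. unfold continuous2_at in H.
  apply (filterlim_comp _ _ _ (fun v => (x, v)) (fun p => f (fst p) (snd p)) (locally y) (locally (x, y))); auto.
  intros P [eps HP]. exists eps. intros v Hv. apply HP. split; simpl; auto. apply ball_center.
Qed.

Lemma locally_fst (J : R -> Prop) t th : locally t J -> locally (t, th) (fun p : R * R => J (fst p)).
Proof.
  intros [eps HP]. exists eps. intros [u v] [Hu Hv]. apply HP. exact Hu.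
Qed.

Lemma per_deriv (f f' : R -> R) : (forall x, f (x + 2 * PI) = f x) -> (forall x, is_derive f x (f' x)) ->
  forall x, f' (x + 2 * PI) = f' x.
Proof.
  intros Hp Hd x.
  assert (H1 : is_derive (fun y => f (y + 2 * PI)) x (f' (x + 2 * PI))).
  { evar (l : R). replace (f' (x + 2 * PI)) with l.
    apply (is_derive_comp f (fun y => y + 2 * PI)). apply Hd. auto_derive; auto.
    unfold l. simpl. unfold scal; simpl; unfold mult; simpl. ring. }
  assert (H2 : is_derive (fun y => f (y + 2 * PI)) x (f' x)).
  { apply (is_derive_ext f). intros; rewrite Hp; auto. apply Hd. }
  apply is_derive_unique in H1. apply is_derive_unique in H2. congruence.
Qed.

Lemma smooth_unpack (J : R -> Prop) alpha : smooth_on J alpha ->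
  exists fx a1 a2 a3 : R -> R -> R,
   (forall x y, J x -> continuous2_at alpha x y) /\
   (forall x y, J x -> is_derive (fun t => alpha t y) x (fx x y)) /\
   (forall x y, J x -> continuous2_at fx x y) /\
   (forall x y, J x -> is_derive (fun s => alpha x s) y (a1 x y)) /\
   (forall x y, J x -> is_derive (fun s => a1 x s) y (a2 x y)) /\
   (forall x y, J x -> is_derive (fun s => a2 x s) y (a3 x y)) /\
   (forall x y, J x -> continuous2_at a1 x y) /\
   (forall x y, J x -> continuous2_at a2 x y) /\
   (forall x y, J x -> continuous2_at a3 x y).
Proof.
  intros Hs. specialize (Hs 4%nat). simpl in Hs.
  destruct Hs as [C0 [fx [fy [Dx [Dy [Hfx Hfy]]]]]].
  destruct Hfx as [Cx _].
  destruct Hfy as [Cy [gx [gy [_ [Dgy [_ Hgy]]]]]].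
  destruct Hgy as [Cgy [hx [hy [_ [Dhy [_ Hhy]]]]]].
  destruct Hhy as [Chy _].
  exists fx, fy, gy, hy. tauto.
Qed.

Theorem lemma6p2
  (I J : R -> Prop) (alpha : R -> R -> R)
  (HI : is_interval I)
  (HJ : open J) (HIJ : forall t, I t -> J t)
  (Hsmooth : smooth_on J alpha)
  (Hper : forall t th, J t -> alpha t (th + 2 * PI) = alpha t th)
  (Heq : forall t th, I t ->
     RtoC (Derive (fun s => alpha s th) t) =
     Cplus (Copp (Cmult (RtoC (alpha t th)) (Lam (toC (alpha t)) th)))
           (Cmult (Hil (toC (alpha t)) th) (Dop (toC (alpha t)) th))) :
  let F := fun t => RInt (fun th => alpha t th) 0 (2 * PI) in
  (forall t, I t ->
     ex_derive F t /\
     RtoC (Derive F t) =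
       Cmult (RtoC (-4)) (inner (pos_part (toC (alpha t)))
                                (Lam (pos_part (toC (alpha t))))) /\
     Derive F t <= 0) /\
  (forall t1 t2, I t1 -> I t2 -> t1 <= t2 -> F t2 <= F t1) /\
  (forall t, I t -> Derive F t = 0 -> exists c : R, forall th, alpha t th = c).
Proof.
  intros F.
  pose proof PIpos as HPI.
  destruct (smooth_unpack J alpha Hsmooth) as [fx [a1 [a2 [a3 [C0 [Dx [Cx [D1 [D2 [D3 [C1 [C2 C3]]]]]]]]]]]].
  assert (Key : forall t, I t ->
    is_derive F t (- (8 * PI) * Ssum (alpha t)) /\
    inner (pos_part (toC (alpha t))) (Lam (pos_part (toC (alpha t)))) = (2 * PI * Ssum (alpha t), 0) /\
    0 <= Ssum (alpha t) /\
    (Ssum (alpha t) = 0 -> exists c, forall th, alpha t th = c)).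
  { intros t It. pose proof (HIJ t It) as Jt.
    assert (Hc0 : forall x, continuous (alpha t) x) by (intros; apply cont2_snd, C0; auto).
    assert (Hc1 : forall x, continuous (a1 t) x) by (intros; apply cont2_snd, C1; auto).
    assert (Hc3 : forall x, continuous (a3 t) x) by (intros; apply cont2_snd, C3; auto).
    assert (Hd0 : forall x, is_derive (alpha t) x (a1 t x)) by (intros; apply D1; auto).
    assert (Hd1 : forall x, is_derive (a1 t) x (a2 t x)) by (intros; apply D2; auto).
    assert (Hd2 : forall x, is_derive (a2 t) x (a3 t x)) by (intros; apply D3; auto).
    assert (Hp0 : forall x, alpha t (x + 2 * PI) = alpha t x) by (intros; apply Hper; auto).
    assert (Hp1 := per_deriv _ _ Hp0 Hd0).
    assert (Hp2 := per_deriv _ _ Hp1 Hd1).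
    assert (E0 : alpha t (2 * PI) = alpha t 0) by (rewrite <- (Rplus_0_l (2 * PI)); apply Hp0).
    assert (E1 : a1 t (2 * PI) = a1 t 0) by (rewrite <- (Rplus_0_l (2 * PI)); apply Hp1).
    assert (E2 : a2 t (2 * PI) = a2 t 0) by (rewrite <- (Rplus_0_l (2 * PI)); apply Hp2).
    destruct (decay (alpha t) (a1 t) (a2 t) (a3 t) Hd0 Hd1 Hd2 Hc3 E0 E1 E2) as [K [HK0 HK]].
    destruct (decay_series (fun n => Rabs (Ac (alpha t) n) + Rabs (Bc (alpha t) n)) (K / (2 * PI))) as [Hs1 Hs0].
    { apply Rmult_le_pos; auto. apply Rlt_le, Rinv_0_lt_compat; lra. }
    { intros; pose proof (Rabs_pos (Ac (alpha t) n)); pose proof (Rabs_pos (Bc (alpha t) n)); lra. }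
    { intros n Hn. unfold Ac, Bc. rewrite !Rabs_mult, Rabs_right by (apply Rle_ge, Rlt_le, Rinv_0_lt_compat; lra).
      specialize (HK n Hn). assert (0 < INR n) by (apply lt_0_INR; lia).
      replace (K / (2 * PI) / INR n ^ 3) with (/ (2 * PI) * (K / INR n ^ 3)) by (field; lra).
      rewrite <- Rmult_plus_distr_l. apply Rmult_le_compat_l; auto. apply Rlt_le, Rinv_0_lt_compat; lra. }
    destruct (deriv_integral (alpha t) (a1 t) Hc0 Hd0 Hc1 E0 Hs1 Hs0) as [DI Hsq].
    assert (Tnn : forall n, 0 <= INR n * (Ac (alpha t) n ^ 2 + Bc (alpha t) n ^ 2)).
    { intros n. apply Rmult_le_pos. apply pos_INR. pose proof (pow2_ge_0 (Ac (alpha t) n)). pose proof (pow2_ge_0 (Bc (alpha t) n)). lra. }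
    split; [|split; [|split]].
    - assert (Hpar : is_derive F t (RInt (fun th => Derive (fun u => alpha u th) t) 0 (2 * PI))).
      { apply (is_derive_RInt_param alpha 0 (2 * PI) t).
        - apply (filter_imp J). intros x Jx th _. exists (fx x th). apply Dx; auto. apply HJ; auto.
        - intros th _. apply continuity_2d_pt_filterlim.
          replace (Derive (fun z : R => alpha z th) t) with (fx t th) by (symmetry; apply is_derive_unique, Dx; auto).
          apply (filterlim_ext_loc (fun p => fx (fst p) (snd p))).
          apply (filter_imp (fun p : R * R => J (fst p))).
          intros p Jp. symmetry. apply is_derive_unique, Dx; auto.
          apply locally_fst, HJ; auto.
          apply Cx; auto.
        - apply (filter_imp J). intros y Jy. apply exR_cont. intros; apply cont2_snd, C0; auto. apply HJ; auto. }
      replace (- (8 * PI) * Ssum (alpha t)) with (RInt (fun th => Derive (fun u => alpha u th) t) 0 (2 * PI)); auto.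
      rewrite (RInt_ext _ (fun th => - (alpha t th * Lr (alpha t) th) + Hi (alpha t) th * a1 t th)).
      apply is_RInt_unique; exact DI.
      intros th _.
      pose proof (f_equal fst (Heq t th It)) as E.
      change (fst (RtoC ?x)) with x in E.
      rewrite RHS_fst, Lam_fst, Lam_snd, Hil_snd, Dop_fst, Dop_snd in E by auto.
      rewrite (is_derive_unique _ _ _ (Hd0 th)) in E.
      match goal with |- @eq _ ?x ?y => change (@eq R x y) end.
      unfold Lr, Hi. rewrite E. ring.
    - apply inner_pos; auto.
    - unfold Ssum. apply Series_nonneg; auto.
    - intros HS0.
      pose proof (Series_nonneg_zero _ Tnn Hsq HS0) as Hz.
      assert (Hab : forall n, (1 <= n)%nat -> Ac (alpha t) n = 0 /\ Bc (alpha t) n = 0).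
      { intros n Hn. specialize (Hz n). assert (0 < INR n) by (apply lt_0_INR; lia).
        pose proof (pow2_ge_0 (Ac (alpha t) n)). pose proof (pow2_ge_0 (Bc (alpha t) n)).
        assert (Ac (alpha t) n ^ 2 + Bc (alpha t) n ^ 2 = 0).
        { apply (Rmult_eq_reg_l (INR n)); lra. }
        split; nra. }
      exists (Ac (alpha t) 0). intros th.
      assert (G := const_of_coefs (fun x => alpha t x - Ac (alpha t) 0)).
      assert (G' : alpha t th - Ac (alpha t) 0 = 0).
      { apply G.
        - intros x. apply (continuous_ext (fun x => alpha t x + (- Ac (alpha t) 0))).
          intros; simpl; ring. apply contR_plus; auto. apply continuous_const.
        - intros x. rewrite Hp0; auto.
        - intros n; split; apply is_RInt_unique.
          + apply (isR_ext (fun x => alpha t x * cos (INR n * x) - Ac (alpha t) 0 * cos (INR n * x))).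
            intros; ring.
            eapply isR_eq; [| apply isR_minus; [apply isR_Ca; auto | apply isR_scal, is_RInt_c]].
            destruct n.
            * change (Nat.eqb 0 0) with true. cbv beta iota. unfold Ac. field. lra.
            * change (Nat.eqb (S n) 0) with false. cbv beta iota.
              rewrite Ca_eq, (proj1 (Hab (S n) ltac:(lia))). ring.
          + apply (isR_ext (fun x => alpha t x * sin (INR n * x) - Ac (alpha t) 0 * sin (INR n * x))).
            intros; ring.
            eapply isR_eq; [| apply isR_minus; [apply isR_Sa; auto | apply isR_scal, is_RInt_s]].
            rewrite Sa_eq. destruct n.
            * rewrite Bc0. ring.
            * rewrite (proj2 (Hab (S n) ltac:(lia))). ring. }
      lra. }
  split; [|split].
  - intros t It. destruct (Key t It) as [Hd [Hin [HS _]]]. split. eexists; eauto. split.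
    + rewrite (is_derive_unique _ _ _ Hd). rewrite Hin. unfold RtoC, Cmult. cbn [fst snd]. f_equal; ring.
    + rewrite (is_derive_unique _ _ _ Hd). nra.
  - intros t1 t2 I1 I2 Hle.
    destruct (MVT_gen F t1 t2 (fun x => - (8 * PI) * Ssum (alpha x))) as [c [Hcc Hmv]].
    + intros x Hx. rewrite Rmin_left, Rmax_right in Hx by lra. apply Key. apply (HI t1 x t2); auto; lra.
    + intros x Hx. rewrite Rmin_left, Rmax_right in Hx by lra. apply continuity_pt_filterlim.
      apply (@ex_derive_continuous R_AbsRing R_NormedModule). eexists. apply Key. apply (HI t1 x t2); auto.
    + rewrite Rmin_left, Rmax_right in Hcc by lra.
      destruct (Key c ltac:(apply (HI t1 c t2); auto)) as [_ [_ [HS _]]].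
      assert (0 <= 8 * PI * Ssum (alpha c) * (t2 - t1)).
      { apply Rmult_le_pos; [apply Rmult_le_pos|]; lra. }
      lra.
  - intros t It HD. destruct (Key t It) as [Hd [_ [_ Hc]]]. apply Hc.
    rewrite (is_derive_unique _ _ _ Hd) in HD.
    assert (8 * PI * Ssum (alpha t) = 0) by lra.
    apply (Rmult_eq_reg_l (8 * PI)); lra.
Qed.
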